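(* Consider the scheme (EQRF1) $$y_{n+1}=e^{\tau A}y_n+\tau\varphi_1(\tau A)\,h\bigl((t_n+c_1\tau)^r\bigr),\qquad n=0,\dots,N-1,$$ started from the exact initial value $y_0$, with a collocation point $c_1\in[0,1]$, and let $\epsilon_n=y(t_n)-y_n$. Then: \begin{enumerate} \item if $h$ is differentiable on $[0,\infty)$ with bounded derivative, then $\|\epsilon_n\|\le C\tau$; \item if $h$ is twice differentiable on $[0,\infty)$ with bounded derivatives $h',h''$, if $h'(x)\in\mathcal{D}(A)$ for all $x\ge0$ with $x\mapsto Ah'(x)$ bounded, and if $c_1=\tfrac12$, then $\|\epsilon_n\|\le C\tau^{1+r}$. \end{enumerate} In both cases the bound holds for all $N\in\mathbb{N}$ and all $0\le n\le N$, with a constant $C$ that may depend on $T$, $r$, $h$ and the semigroup bound, but not on $n$ or $\tau$.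
   Context: $(X,\|\cdot\|)$ is a Banach space and $A:\mathcal{D}(A)\subset X\to X$ is a linear operator generating a strongly continuous semigroup $\{e^{tA}\}_{t\ge0}$ on $X$. Fix $T>0$, $0<r<1$, $y_0\in X$ and $h:[0,\infty)\to X$. The problem is $y'(t)=Ay(t)+h(t^r)$, $y(0)=y_0$, $t\in[0,T]$, whose (mild) solution is given by the variation-of-constants formula $y(t)=e^{tA}y_0+\int_0^te^{(t-s)A}h(s^r)\,ds$; equivalently $y(t_{n+1})=e^{\tau A}y(t_n)+\int_0^\tau e^{(\tau-s)A}h((t_n+s)^r)\,ds$. Time grid: $N\in\mathbb{N}$, $\tau=T/N$, $t_n=n\tau$. The operator $\varphi_1(\tau A)$ is defined by $\tau\varphi_1(\tau A)v=\int_0^\tau e^{(\tau-s)A}v\,ds$ for $v\in X$. *)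

(* Defs.v *)
From Stdlib Require Import Reals Lra.
From Coquelicot Require Import Coquelicot.
Open Scope R_scope.

(* Real power s^r for s >= 0, with the convention 0^r = 0 (r > 0). *)
Definition rpow (s r : R) : R := if Rle_dec s 0 then 0 else Rpower s r.

(* Strongly continuous (C0) semigroup of bounded linear operators on X,
   given by S t for t >= 0 (values for t < 0 are irrelevant). *)
Definition C0_semigroup {X : CompleteNormedModule R_AbsRing} (S : R -> X -> X) : Prop :=
  (forall t, 0 <= t -> forall x y, S t (plus x y) = plus (S t x) (S t y)) /\
  (forall t, 0 <= t -> forall (a : R) x, S t (scal a x) = scal a (S t x)) /\
  (forall t, 0 <= t -> exists M, forall x, norm (S t x) <= M * norm x) /\
  (forall x, S 0 x = x) /\
  (forall s t x, 0 <= s -> 0 <= t -> S (s + t) x = S s (S t x)) /\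
  (forall x, filterlim (fun t => S t x) (at_right 0) (locally x)).

(* x is in D(A) and A x = v, where A is the generator of S. *)
Definition generator {X : CompleteNormedModule R_AbsRing} (S : R -> X -> X) (x v : X) : Prop :=
  filterlim (fun t => scal (/ t) (minus (S t x) x)) (at_right 0) (locally v).

Definition deriv_nonneg {X : CompleteNormedModule R_AbsRing} (f f' : R -> X) : Prop :=
  forall x, 0 <= x -> forall eps, 0 < eps -> exists delta, 0 < delta /\
    forall y, 0 <= y -> Rabs (y - x) < delta ->
      norm (minus (f y) (plus (f x) (scal (y - x) (f' x)))) <= eps * Rabs (y - x).

Definition mild_sol {X : CompleteNormedModule R_AbsRing} (S : R -> X -> X)
  (h : R -> X) (r : R) (y0 : X) (t : R) : X :=
  plus (S t y0) (RInt (fun s => S (t - s) (h (rpow s r))) 0 t).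

(* tau * phi_1(tau A) v = int_0^tau e^{(tau-s)A} v ds *)
Definition tau_phi1 {X : CompleteNormedModule R_AbsRing} (S : R -> X -> X) (tau : R) (v : X) : X :=
  RInt (fun s => S (tau - s) v) 0 tau.

Fixpoint EQRF1 {X : CompleteNormedModule R_AbsRing} (S : R -> X -> X)
  (h : R -> X) (r : R) (y0 : X) (tau c1 : R) (n : nat) : X :=
  match n with
  | O => y0
  | Datatypes.S m =>
      plus (S tau (EQRF1 S h r y0 tau c1 m))
           (tau_phi1 S tau (h (rpow (INR m * tau + c1 * tau) r)))
  end.

(* Main.v *)
Require Import Defs.
From Stdlib Require Import Reals.
From Coquelicot Require Import Coquelicot.
Open Scope R_scope.
From Stdlib Require Import Lra Lia Classical ClassicalEpsilon.

Lemma choice_fun {A B : Type} (P : A -> B -> Prop) :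
  (forall a, exists b, P a b) -> exists f : A -> B, forall a, P a (f a).
Proof.
  intros H. exists (fun a => proj1_sig (constructive_indefinite_description _ (H a))).
  intros a. exact (proj2_sig (constructive_indefinite_description _ (H a))).
Qed.

Section BasicsG.
Context {X : NormedModule R_AbsRing}.

Lemma g_norm_scal_R (l : R) (x : X) : norm (scal l x) = Rabs l * norm x.
Proof.
  apply Rle_antisym.
  - exact (@norm_scal R_AbsRing X l x).
  - destruct (Req_dec l 0) as [->|Hl].
    + rewrite Rabs_R0. rewrite Rmult_0_l. apply norm_ge_0.
    + assert (H := @norm_scal _ X (/ l) (scal l x)).
      assert (E : scal (/ l) (scal l x) = x).
      { rewrite scal_assoc. replace (mult (/ l) l) with (@one R_AbsRing). now rewrite scal_one.
          unfold mult, one; simpl; field; auto. }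
      assert (H2 : norm x <= Rabs (/ l) * norm (scal l x)).
      { eapply Rle_trans; [apply Req_le|apply H]. f_equal. symmetry. exact E. }
      clear H. rename H2 into H. rewrite Rabs_inv in H.
      assert (0 < Rabs l) by (apply Rabs_pos_lt; auto).
      apply (Rmult_le_reg_l (/ Rabs l)). apply Rinv_0_lt_compat; auto.
      rewrite <- Rmult_assoc, Rinv_l by lra. lra.
Qed.

Lemma le_eps (a b : R) : (forall e, 0 < e -> a <= b + e) -> a <= b.
Proof.
  intros H. destruct (Rle_dec a b); auto.
  specialize (H ((a - b)/2) ltac:(lra)). lra.
Qed.

Lemma g_norm_minus_sym (x y : X) : norm (minus x y) = norm (minus y x).
Proof. rewrite <- norm_opp, opp_minus. auto. Qed.

Lemma g_norm_minus_tri (x y z : X) : norm (minus x z) <= norm (minus x y) + norm (minus y z).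
Proof. rewrite (minus_trans y). apply norm_triangle. Qed.

Lemma g_norm_minus_ge (x y : X) : norm x - norm y <= norm (minus x y).
Proof. eapply Rle_trans; [apply Rle_abs|apply norm_triangle_inv]. Qed.

Lemma g_norm_minus_self (x : X) : norm (minus x x) = 0.
Proof. rewrite minus_eq_zero. apply norm_zero. Qed.

End BasicsG.

Section BasicsC.
Context {X : CompleteNormedModule R_AbsRing}.
Lemma norm_scal_R (l : R) (x : X) : norm (scal l x) = Rabs l * norm x.
Proof. exact (g_norm_scal_R l x). Qed.
Lemma norm_minus_sym (x y : X) : norm (minus x y) = norm (minus y x).
Proof. exact (g_norm_minus_sym x y). Qed.
Lemma norm_minus_tri (x y z : X) : norm (minus x z) <= norm (minus x y) + norm (minus y z).
Proof. exact (g_norm_minus_tri x y z). Qed.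
Lemma norm_minus_ge (x y : X) : norm x - norm y <= norm (minus x y).
Proof. exact (g_norm_minus_ge x y). Qed.
Lemma norm_minus_self (x : X) : norm (minus x x) = 0.
Proof. exact (g_norm_minus_self x). Qed.
Lemma ball_norm_lt (x y : X) (e : posreal) : ball x e y -> norm (minus y x) < @norm_factor R_AbsRing X * e.
Proof. intros H. exact (norm_compat2 x y e H). Qed.
Lemma norm_lt_ball (x y : X) (e : R) : norm (minus y x) < e -> ball x e y.
Proof. intros H. exact (norm_compat1 x y e H). Qed.
Lemma nf_pos : 0 < @norm_factor R_AbsRing X.
Proof. apply norm_factor_gt_0. Qed.
End BasicsC.


Section Semigroup.
Context {X : CompleteNormedModule R_AbsRing} (S : R -> X -> X) (HS : C0_semigroup S).

Lemma S_plus t x y : 0 <= t -> S t (plus x y) = plus (S t x) (S t y).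
Proof. intros; apply (proj1 HS); auto. Qed.
Lemma S_scal t a x : 0 <= t -> S t (scal a x) = scal a (S t x).
Proof. intros; apply (proj1 (proj2 HS)); auto. Qed.
Lemma S_bdd t : 0 <= t -> exists M, forall x, norm (S t x) <= M * norm x.
Proof. intros; apply (proj1 (proj2 (proj2 HS))); auto. Qed.
Lemma S_0 x : S 0 x = x.
Proof. apply (proj1 (proj2 (proj2 (proj2 HS)))). Qed.
Lemma S_comp s t x : 0 <= s -> 0 <= t -> S (s + t) x = S s (S t x).
Proof. intros; apply (proj1 (proj2 (proj2 (proj2 (proj2 HS))))); auto. Qed.
Lemma S_cont x : filterlim (fun t => S t x) (at_right 0) (locally x).
Proof. apply (proj2 (proj2 (proj2 (proj2 (proj2 HS))))). Qed.

Lemma S_zero t : 0 <= t -> S t zero = zero.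
Proof.
  intros Ht. pose proof (S_scal t (@zero R_Ring) zero Ht) as H.
  rewrite !scal_zero_l in H. exact H.
Qed.
Lemma S_opp t x : 0 <= t -> S t (opp x) = opp (S t x).
Proof.
  intros Ht. pose proof (S_scal t (opp (@one R_Ring)) x Ht) as H.
  rewrite !scal_opp_one in H. exact H.
Qed.
Lemma S_minus t x y : 0 <= t -> S t (minus x y) = minus (S t x) (S t y).
Proof. intros Ht. unfold minus. rewrite S_plus, S_opp; auto. Qed.

Lemma S_cont_eps x eps : 0 < eps -> exists d, 0 < d /\
  forall t, 0 <= t < d -> norm (minus (S t x) x) < eps.
Proof.
  intros He.
  assert (Hf := proj1 (@filterlim_locally _ _ (at_right 0) (@filter_filter _ _ (at_right_proper_filter 0)) _ _) (S_cont x)).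
  assert (Hnf : 0 < @norm_factor _ X) by apply norm_factor_gt_0.
  set (e' := mkposreal (eps / @norm_factor R_AbsRing X) ltac:(apply Rdiv_lt_0_compat; auto)).
  specialize (Hf e'). destruct Hf as [d Hd].
  exists d. split. apply cond_pos. intros t [Ht0 Htd].
  destruct (Req_dec t 0) as [->|Hn].
  - rewrite S_0. rewrite norm_minus_self. auto.
  - assert (Hb := Hd t). assert (ball x e' (S t x)).
    { apply Hb. change (Rabs (t - 0) < d). rewrite Rabs_right; lra. lra. }
    apply ball_norm_lt in H. simpl in H. replace eps with (@norm_factor R_AbsRing X * (eps / @norm_factor R_AbsRing X)). auto.
    field. lra.
Qed.

End Semigroup.

Lemma minus_def {G : AbelianGroup} (x y : G) : minus x y = plus x (opp y).
Proof. reflexivity. Qed.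
Lemma g_alg1 {G : AbelianGroup} (w y : G) : minus (plus w y) (minus w y) = plus y y.
Proof.
  rewrite !minus_def, opp_plus, opp_opp.
  rewrite <- plus_assoc, (plus_comm y), plus_assoc, (plus_assoc w), plus_opp_r, plus_zero_l.
  auto.
Qed.
Lemma g_alg2 {G : AbelianGroup} (w y : G) : minus (plus w y) w = y.
Proof.
  rewrite minus_def, (plus_comm w), <- plus_assoc, plus_opp_r, plus_zero_r. auto.
Qed.
Lemma g_alg3 {G : AbelianGroup} (w y : G) : minus (minus w y) w = opp y.
Proof.
  rewrite !minus_def, (plus_comm w), <- plus_assoc, plus_opp_r, plus_zero_r. auto.
Qed.
Lemma g_plus_double {V : NormedModule R_AbsRing} (y : V) : plus y y = scal 2 y.
Proof.
  replace 2 with (plus (@one R_AbsRing) one) by (unfold plus, one; simpl; lra).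
  rewrite scal_distr_r, scal_one. auto.
Qed.
Lemma g_norm_minus_le {V : NormedModule R_AbsRing} (a b : V) : norm (minus a b) <= norm a + norm b.
Proof. rewrite minus_def. eapply Rle_trans. apply norm_triangle. rewrite norm_opp. lra. Qed.

Section BC.
Context {X : CompleteNormedModule R_AbsRing}.
Lemma alg1 (w y : X) : minus (plus w y) (minus w y) = plus y y.
Proof. exact (g_alg1 w y). Qed.
Lemma alg2 (w y : X) : minus (plus w y) w = y.
Proof. exact (g_alg2 w y). Qed.
Lemma alg3 (w y : X) : minus (minus w y) w = opp y.
Proof. exact (g_alg3 w y). Qed.
Lemma plus_double (y : X) : plus y y = scal 2 y.
Proof. exact (g_plus_double y). Qed.
Lemma norm_minus_le (a b : X) : norm (minus a b) <= norm a + norm b.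
Proof. exact (g_norm_minus_le a b). Qed.
Lemma norm_opp' (a : X) : norm (opp a) = norm a.
Proof. exact (norm_opp a). Qed.
Lemma norm_zero' : norm (@zero X) = 0.
Proof. exact norm_zero. Qed.
Lemma norm_eq_zero' (x : X) : norm x = 0 -> x = zero.
Proof. exact (norm_eq_zero x). Qed.
Lemma norm_ge_0' (x : X) : 0 <= norm x.
Proof. exact (norm_ge_0 x). Qed.
End BC.

Section UBP.
Context {X : CompleteNormedModule R_AbsRing} (S : R -> X -> X) (HS : C0_semigroup S).

Definition Eset t v := exists x : X, norm x <= 1 /\ v = norm (S t x).

Lemma lub_exists t : 0 <= t -> exists nu, is_lub (Eset t) nu.
Proof.
  intros Ht. destruct (S_bdd S HS t Ht) as [M HM].
  destruct (completeness (Eset t)) as [nu Hnu].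
  - exists (Rabs M). intros v [x [Hx ->]]. eapply Rle_trans. apply HM.
    assert (0 <= norm x) by apply norm_ge_0'.
    eapply Rle_trans. apply Rmult_le_compat_r; auto. apply Rle_abs.
    assert (0 <= Rabs M) by apply Rabs_pos. nra.
  - exists (norm (S t zero)). exists zero. split; auto. rewrite norm_zero'. lra.
  - exists nu. auto.
Qed.

Lemma unit_vec (w : X) : norm w <> 0 -> norm (scal (/ norm w) w) = 1.
Proof.
  intros H. rewrite norm_scal_R. assert (0 <= norm w) by apply norm_ge_0'.
  rewrite Rabs_right. field. auto. apply Rle_ge. left. apply Rinv_0_lt_compat. lra.
Qed.

Lemma lub_bound t nu : 0 <= t -> is_lub (Eset t) nu -> forall w, norm (S t w) <= nu * norm w.
Proof.
  intros Ht [Hub _] w.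
  destruct (Req_dec (norm w) 0) as [H0|H0].
  - apply norm_eq_zero' in H0. subst w. rewrite (S_zero S HS), norm_zero'; auto. lra.
  - assert (0 <= norm w) by apply norm_ge_0'.
    assert (Hw : 0 < norm w) by lra.
    assert (He : Eset t (norm (S t (scal (/ norm w) w)))).
    { exists (scal (/ norm w) w). split; auto. rewrite unit_vec; auto. lra. }
    apply Hub in He. rewrite (S_scal S HS), norm_scal_R in He; auto.
    rewrite Rabs_right in He. 2:{ apply Rle_ge; left; apply Rinv_0_lt_compat; auto. }
    apply (Rmult_le_reg_l (/ norm w)). apply Rinv_0_lt_compat; auto.
    replace (/ norm w * (nu * norm w)) with nu by (field; lra). auto.
Qed.

Lemma lub_near t nu : is_lub (Eset t) nu -> 0 < nu ->
  exists z : X, norm z <= 1 /\ 2/3 * nu < norm (S t z).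
Proof.
  intros [Hub Hl] Hnu. apply NNPP. intros Hn.
  assert (nu <= 2/3 * nu).
  { apply Hl. intros v [x [Hx ->]]. apply Rnot_lt_le. intros Hlt. apply Hn. exists x; auto. }
  lra.
Qed.

Fixpoint iter_seq (st : nat -> X -> X) (n : nat) : X :=
  match n with O => st O zero | Datatypes.S m => st (Datatypes.S m) (iter_seq st m) end.

Lemma third_pow_pos n : 0 < (/3) ^ n.
Proof. apply pow_lt. lra. Qed.

Lemma S_local_bound : exists d K, 0 < d /\ 0 <= K /\
  forall t, 0 <= t <= d -> forall x, norm (S t x) <= K * norm x.
Proof.
  apply NNPP. intros Hn.
  set (c := fun n : nat => 6 * 3 ^ n * (INR n + 1)).
  assert (Hc : forall n, 0 < c n).
  { intros n. unfold c. assert (0 < 3 ^ n) by (apply pow_lt; lra). pose proof (pos_INR n). nra. }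
  assert (A : forall n : nat, exists p : R * R, (0 <= fst p <= / (INR n + 1)) /\
             is_lub (Eset (fst p)) (snd p) /\ c n < snd p).
  { intros n. apply NNPP; intros Hno. apply Hn.
    exists (/ (INR n + 1)), (c n). pose proof (pos_INR n).
    split. apply Rinv_0_lt_compat; lra. split. left; apply Hc.
    intros t Ht x. apply Rnot_lt_le. intros Hlt.
    destruct (lub_exists t (proj1 Ht)) as [nu Hnu].
    apply Hno. exists (t, nu). simpl. split; auto. split; auto.
    destruct (Req_dec (norm x) 0) as [H0|H0].
    - apply norm_eq_zero' in H0. subst x. rewrite (S_zero S HS), norm_zero' in Hlt; try lra.
    - assert (0 <= norm x) by apply norm_ge_0'.
      assert (He : Eset t (norm (S t (scal (/ norm x) x)))).
      { exists (scal (/ norm x) x). split; auto. rewrite unit_vec; auto. lra. }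
      apply (proj1 Hnu) in He. rewrite (S_scal S HS), norm_scal_R in He; try lra.
      rewrite Rabs_right in He. 2:{ apply Rle_ge; left; apply Rinv_0_lt_compat; lra. }
      apply Rlt_le_trans with (2 := He).
      apply (Rmult_lt_reg_l (norm x)). lra.
      replace (norm x * (/ norm x * norm (S t x))) with (norm (S t x)) by (field; lra). lra. }
  destruct (choice_fun _ A) as [p Hp].
  set (tt := fun n => fst (p n)). set (nu := fun n => snd (p n)).
  assert (B : forall n, exists z : X, norm z <= 1 /\ 2/3 * nu n < norm (S (tt n) z)).
  { intros n. destruct (Hp n) as [_ [H1 H2]]. apply lub_near; auto.
    specialize (Hc n). unfold nu. lra. }
  destruct (choice_fun _ B) as [z Hz].
  set (y := fun n => scal ((/3) ^ n) (z n)).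
  assert (Htt : forall n, 0 <= tt n) by (intros n; apply (Hp n)).
  assert (Hy1 : forall n, norm (y n) <= (/3) ^ n).
  { intros n. unfold y. rewrite norm_scal_R. rewrite Rabs_right.
    2:{ left; apply third_pow_pos. }
    pose proof (third_pow_pos n). destruct (Hz n). nra. }
  assert (Hy2 : forall n, 2/3 * (/3) ^ n * nu n < norm (S (tt n) (y n))).
  { intros n. unfold y. rewrite (S_scal S HS), norm_scal_R; auto. rewrite Rabs_right.
    2:{ left; apply third_pow_pos. }
    pose proof (third_pow_pos n). destruct (Hz n). nra. }
  set (step := fun n (w : X) =>
    if Rle_dec (norm (S (tt n) (y n))) (norm (S (tt n) (plus w (y n))))
    then plus w (y n) else minus w (y n)).
  assert (Hstep1 : forall n w, norm (S (tt n) (y n)) <= norm (S (tt n) (step n w))).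
  { intros n w. unfold step. destruct Rle_dec as [H|H]; auto.
    apply Rnot_le_lt in H.
    assert (E : 2 * norm (S (tt n) (y n)) <=
               norm (S (tt n) (plus w (y n))) + norm (S (tt n) (minus w (y n)))).
    { rewrite <- (Rabs_right 2) by lra. rewrite <- norm_scal_R, <- plus_double.
      rewrite <- (S_plus S HS), <- (alg1 w (y n)), (S_minus S HS); auto. apply norm_minus_le. }
    lra. }
  assert (Hstep2 : forall n w, norm (minus (step n w) w) <= (/3) ^ n).
  { intros n w. unfold step. destruct Rle_dec.
    - rewrite alg2. auto.
    - rewrite alg3, norm_opp'. auto. }
  set (xs := iter_seq step).
  assert (Hxs : forall n, exists w, xs n = step n w).
  { intros [|n]; simpl. exists zero; auto. exists (xs n); auto. }
  assert (Hcau : forall n j, norm (minus (xs (n + j)%nat) (xs n)) <= (/3) ^ n / 2 - (/3) ^ (n + j) / 2).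
  { intros n j. induction j.
    - rewrite Nat.add_0_r, norm_minus_self. lra.
    - replace (n + Datatypes.S j)%nat with (Datatypes.S (n + j)) by lia.
      change (xs (Datatypes.S (n + j))) with (step (Datatypes.S (n + j)) (xs (n + j)%nat)).
      eapply Rle_trans. apply (norm_minus_tri _ (xs (n + j)%nat)).
      specialize (Hstep2 (Datatypes.S (n + j)) (xs (n + j)%nat)).
      simpl pow in *. lra. }
  assert (Hlim : exists xl : X, filterlim xs eventually (locally xl)).
  { apply (proj1 (filterlim_locally_cauchy (F := eventually) xs)). intros eps.
    destruct (pow_lt_1_zero (/3) ltac:(rewrite Rabs_right; lra) eps (cond_pos eps)) as [N HN].
    exists (fun m => (N <= m)%nat). split. exists N; auto.
    intros u v Hu Hv. apply norm_lt_ball.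
    eapply Rle_lt_trans. apply (norm_minus_tri _ (xs N)).
    replace v with (N + (v - N))%nat by lia. replace u with (N + (u - N))%nat by lia.
    rewrite norm_minus_sym with (x := xs N).
    pose proof (Hcau N (v - N)%nat). pose proof (Hcau N (u - N)%nat).
    pose proof (third_pow_pos (N + (v - N))). pose proof (third_pow_pos (N + (u - N))).
    specialize (HN N (le_n _)). rewrite Rabs_right in HN. lra. left; apply third_pow_pos. }
  destruct Hlim as [xl Hxl].
  assert (Hdist : forall n, norm (minus xl (xs n)) <= (/3) ^ n / 2).
  { intros n. apply le_eps. intros e He.
    assert (Hf := proj1 (@filterlim_locally _ _ eventually _ _ _) Hxl).
    specialize (Hf (mkposreal (e / @norm_factor R_AbsRing X) (Rdiv_lt_0_compat _ _ He nf_pos))).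
    destruct Hf as [N HN]. specialize (HN (n + N)%nat ltac:(lia)).
    apply ball_norm_lt in HN. simpl in HN.
    replace (@norm_factor R_AbsRing X * (e / @norm_factor R_AbsRing X)) with e in HN
      by (field; apply Rgt_not_eq, nf_pos).
    eapply Rle_trans. apply (norm_minus_tri _ (xs (n + N)%nat)).
    rewrite norm_minus_sym in HN. pose proof (Hcau n N). pose proof (third_pow_pos (n + N)). lra. }
  assert (Hlow : forall n, INR n + 1 <= norm (S (tt n) xl)).
  { intros n. destruct (Hp n) as [_ [Hlub Hcn]]. fold (tt n) (nu n) in Hlub, Hcn.
    destruct (Hxs n) as [w Hw].
    pose proof (Hstep1 n w) as H1. rewrite <- Hw in H1.
    pose proof (norm_minus_ge (S (tt n) (xs n)) (S (tt n) xl)) as H2.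
    rewrite <- (S_minus S HS) in H2; auto.
    pose proof (lub_bound _ _ (Htt n) Hlub (minus (xs n) xl)) as H3.
    rewrite norm_minus_sym in H3. pose proof (Hdist n).
    pose proof (Hy2 n). pose proof (third_pow_pos n).
    assert (0 < nu n) by (pose proof (Hc n); lra).
    assert (H4b : nu n * norm (minus xl (xs n)) <= nu n * ((/3) ^ n / 2)) by (apply Rmult_le_compat_l; lra).
    assert (H5b : c n * (/ 3) ^ n / 6 = INR n + 1).
    { unfold c. replace (6 * 3 ^ n * (INR n + 1) * (/ 3) ^ n / 6) with ((3 * / 3) ^ n * (INR n + 1)).
      replace (3 * / 3) with 1 by field. rewrite pow1. ring. rewrite Rpow_mult_distr. field. }
    assert (c n * (/3) ^ n < nu n * (/ 3) ^ n) by (apply Rmult_lt_compat_r; auto).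
    lra. }
  destruct (S_cont_eps S HS xl 1 ltac:(lra)) as [d [Hd Hdd]].
  destruct (INR_unbounded (Rmax (/ d) (norm xl + 1))) as [n Hn'].
  assert (H1 : / d < INR n) by (eapply Rle_lt_trans; [apply Rmax_l|exact Hn']).
  assert (H2 : norm xl + 1 < INR n) by (eapply Rle_lt_trans; [apply Rmax_r|exact Hn']).
  assert (H3 : / (INR n + 1) < d).
  { assert (0 < / d) by (apply Rinv_0_lt_compat; auto).
    rewrite <- (Rinv_inv d). apply Rinv_lt_contravar. nra. lra. }
  destruct (Hp n) as [[Ht0 Ht1] _]. fold (tt n) in Ht0, Ht1.
  specialize (Hdd (tt n) ltac:(lra)).
  pose proof (norm_minus_ge (S (tt n) xl) xl). pose proof (Hlow n). lra.
Qed.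

End UBP.

Section Bound.
Context {X : CompleteNormedModule R_AbsRing} (S : R -> X -> X) (HS : C0_semigroup S).

Lemma S_bound_T (T : R) : exists M, 1 <= M /\
  forall t, 0 <= t <= T -> forall x, norm (S t x) <= M * norm x.
Proof.
  destruct (S_local_bound S HS) as [d [K [Hd [HK HSK]]]].
  set (K' := Rmax K 1).
  assert (HK1 : 1 <= K') by apply Rmax_r.
  assert (Hj : forall j : nat, forall t, 0 <= t <= INR j * d + d -> forall x,
            norm (S t x) <= K' ^ (Datatypes.S j) * norm x).
  { induction j; intros t Ht x.
    - simpl in Ht. rewrite Rmult_0_l, Rplus_0_l in Ht. simpl. rewrite Rmult_1_r.
      eapply Rle_trans. apply HSK; auto. apply Rmult_le_compat_r. apply norm_ge_0'. apply Rmax_l.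
    - destruct (Rle_dec t d) as [Htd|Htd].
      + eapply Rle_trans. apply HSK; lra. apply Rmult_le_compat_r. apply norm_ge_0'.
        eapply Rle_trans. apply Rmax_l. fold K'. rewrite <- pow_1 at 1. apply Rle_pow; auto; lia.
      + replace t with (d + (t - d)) by ring. rewrite (S_comp S HS) by lra.
        eapply Rle_trans. apply HSK; lra.
        rewrite S_INR in Ht.
        assert (Hn := IHj (t - d) ltac:(lra) x).
        change (K' ^ Datatypes.S (Datatypes.S j)) with (K' * K' ^ (Datatypes.S j)).
        rewrite Rmult_assoc. eapply Rle_trans. apply Rmult_le_compat_r. apply norm_ge_0'. apply Rmax_l.
        fold K'. apply Rmult_le_compat_l; lra. }
  destruct (INR_unbounded (T / d)) as [j Hjd].
  exists (K' ^ Datatypes.S j). split.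
  - rewrite <- (pow1 (Datatypes.S j)). apply pow_incr. lra.
  - intros t Ht x. apply Hj. split. lra.
    assert (T <= INR j * d). { apply (Rmult_le_reg_r (/ d)). apply Rinv_0_lt_compat; auto.
      replace (INR j * d * / d) with (INR j) by (field; lra). unfold Rdiv in Hjd. lra. }
    lra.
Qed.

Lemma S_strong_cont (w : X) (s0 : R) : 0 <= s0 -> forall eps, 0 < eps -> exists delta, 0 < delta /\
  forall s, 0 <= s -> Rabs (s - s0) < delta -> norm (minus (S s w) (S s0 w)) < eps.
Proof.
  intros Hs0 eps He.
  destruct (S_bound_T s0) as [M [HM1 HM]].
  destruct (S_cont_eps S HS w (eps / M) ltac:(apply Rdiv_lt_0_compat; lra)) as [d [Hd Hdd]].
  exists d. split; auto. intros s Hs Hsd.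
  destruct (Rle_dec s0 s) as [Hle|Hle].
  - replace s with (s0 + (s - s0)) by ring. rewrite (S_comp S HS) by lra.
    rewrite <- (S_minus S HS) by lra.
    eapply Rle_lt_trans. apply HM; lra.
    rewrite Rabs_right in Hsd by lra.
    assert (H := Hdd (s - s0) ltac:(lra)).
    apply (Rmult_lt_compat_l M) in H; [|lra].
    replace (M * (eps / M)) with eps in H by (field; lra). auto.
  - replace s0 with (s + (s0 - s)) by ring. rewrite (S_comp S HS) by lra.
    rewrite <- (S_minus S HS) by lra.
    eapply Rle_lt_trans. apply HM; lra.
    rewrite Rabs_left in Hsd by lra.
    assert (H := Hdd (s0 - s) ltac:(lra)).
    rewrite norm_minus_sym.
    apply (Rmult_lt_compat_l M) in H; [|lra].
    replace (M * (eps / M)) with eps in H by (field; lra). auto.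
Qed.

End Bound.

(* Linear maps commute with integrals *)
Lemma scal0_R {V : NormedModule R_AbsRing} (v : V) : scal 0 v = zero.
Proof. exact (scal_zero_l v). Qed.
Lemma scalm1_R {V : NormedModule R_AbsRing} (v : V) : scal (-1) v = opp v.
Proof. exact (scal_opp_one v). Qed.
Lemma scal1_R {V : NormedModule R_AbsRing} (v : V) : scal 1 v = v.
Proof. exact (scal_one v). Qed.

Section Lin.
Context {U V : NormedModule R_AbsRing} (L : U -> V).
Hypothesis Lplus : forall x y, L (plus x y) = plus (L x) (L y).
Hypothesis Lscal : forall (a : R) x, L (scal a x) = scal a (L x).
Hypothesis Lbdd : exists K, forall x, norm (L x) <= K * norm x.

Lemma L_zero : L zero = zero.
Proof.
  pose proof (Lscal 0 zero) as H. rewrite !scal0_R in H. exact H.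
Qed.

Lemma L_minus x y : L (minus x y) = minus (L x) (L y).
Proof.
  rewrite !minus_def, Lplus. f_equal.
  pose proof (Lscal (-1) y) as H. rewrite !scalm1_R in H. exact H.
Qed.

Lemma Riemann_sum_L f ptd : Riemann_sum (fun s => L (f s)) ptd = L (Riemann_sum f ptd).
Proof.
  apply SF_cons_ind with (s := ptd).
  - intros x0. unfold Riemann_sum. simpl. symmetry. apply L_zero.
  - intros h s IH. rewrite !Riemann_sum_cons, IH, Lplus, Lscal. auto.
Qed.

Lemma L_cont (I : U) : filterlim L (locally I) (locally (L I)).
Proof.
  destruct Lbdd as [K HK].
  apply filterlim_locally. intros eps.
  assert (Hnf := @norm_factor_gt_0 R_AbsRing U).
  set (K' := Rabs K + 1).
  assert (0 < K') by (unfold K'; pose proof (Rabs_pos K); lra).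
  exists (mkposreal (eps / (K' * @norm_factor R_AbsRing U)) ltac:(apply Rdiv_lt_0_compat; [apply cond_pos|nra])).
  intros y Hy. apply norm_compat1. apply norm_compat2 in Hy. simpl in Hy.
  rewrite <- L_minus. eapply Rle_lt_trans. apply HK.
  assert (0 <= norm (minus y I)) by apply norm_ge_0.
  apply Rle_lt_trans with (K' * norm (minus y I)).
  { apply Rmult_le_compat_r; auto. unfold K'. pose proof (Rle_abs K). lra. }
  replace (pos eps) with (K' * (@norm_factor R_AbsRing U * (eps / (K' * @norm_factor R_AbsRing U)))).
  apply Rmult_lt_compat_l; auto. field. split; lra.
Qed.

Lemma is_RInt_L f a b I : is_RInt f a b I -> is_RInt (fun s => L (f s)) a b (L I).
Proof.
  intros H. unfold is_RInt in *.
  eapply filterlim_ext.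
  2:{ eapply filterlim_comp. apply H. apply L_cont. }
  intros ptd. simpl. rewrite Riemann_sum_L, Lscal. auto.
Qed.

End Lin.

Lemma g_alg4 {G : AbelianGroup} (u v w : G) : minus u v = plus (minus u (plus v w)) w.
Proof.
  rewrite !minus_def, opp_plus, plus_assoc, <- (plus_assoc _ (opp w)), plus_opp_l, plus_zero_r. auto.
Qed.
Lemma g_norm_split {V : NormedModule R_AbsRing} (u v w : V) :
  norm (minus u v) <= norm (minus u (plus v w)) + norm w.
Proof. rewrite (g_alg4 u v w). apply norm_triangle. Qed.

Section MVT.
Context {X : CompleteNormedModule R_AbsRing}.

Lemma norm_split (u v w : X) : norm (minus u v) <= norm (minus u (plus v w)) + norm w.
Proof. exact (g_norm_split u v w). Qed.

Definition cont_within (g : R -> X) (a b : R) :=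
  forall x, a <= x <= b -> forall eps, 0 < eps -> exists delta, 0 < delta /\
    forall y, a <= y <= b -> Rabs (y - x) < delta -> norm (minus (g y) (g x)) < eps.

Definition rderiv_within (g g' : R -> X) (a b : R) :=
  forall x, a <= x < b -> forall eps, 0 < eps -> exists delta, 0 < delta /\
    forall y, x < y <= b -> y - x < delta ->
      norm (minus (g y) (plus (g x) (scal (y - x) (g' x)))) <= eps * (y - x).

Lemma mvt (g g' : R -> X) a b K : a <= b -> cont_within g a b -> rderiv_within g g' a b ->
  (forall x, a <= x < b -> norm (g' x) <= K) -> norm (minus (g b) (g a)) <= K * (b - a).
Proof.
  intros Hab Hc Hd HK.
  assert (Main : forall e, 0 < e -> norm (minus (g b) (g a)) <= (K + e) * (b - a)).
  { intros e He.
    set (Q := fun x => norm (minus (g x) (g a)) <= (K + e) * (x - a)).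
    set (E := fun x => a <= x <= b /\ forall y, a <= y <= x -> Q y).
    assert (QA : Q a). { unfold Q. rewrite norm_minus_self. lra. }
    destruct (completeness E) as [c [Hub Hlub]].
    { exists b. intros x [Hx _]. lra. }
    { exists a. split. lra. intros y Hy. replace y with a by lra. auto. }
    assert (Hac : a <= c). { apply Hub. split. lra. intros y Hy. replace y with a by lra. auto. }
    assert (Hcb : c <= b). { apply Hlub. intros x [Hx _]. lra. }
    assert (Hbelow : forall y, a <= y < c -> Q y).
    { intros y Hy. apply NNPP. intros HQ.
      assert (c <= y). { apply Hlub. intros x [Hx Hx2]. apply Rnot_lt_le. intros Hxy.
        apply HQ. apply Hx2. lra. }
      lra. }
    assert (Qc : Q c).
    { destruct (Req_dec c a) as [->|Hca]. auto.
      unfold Q. apply le_eps. intros eta Heta.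
      destruct (Hc c ltac:(lra) eta Heta) as [dl [Hdl Hdd]].
      set (y := Rmax a (c - dl / 2)).
      assert (Hy : a <= y < c). { unfold y. split. apply Rmax_l. apply Rmax_lub_lt; lra. }
      assert (Hyc : Rabs (y - c) < dl).
      { rewrite Rabs_left1 by lra. unfold y. apply Rmax_case_strong; intros; lra. }
      specialize (Hdd y ltac:(lra) Hyc). specialize (Hbelow y Hy). unfold Q in Hbelow.
      eapply Rle_trans. apply (norm_minus_tri _ (g y)). rewrite norm_minus_sym in Hdd.
      assert ((K + e) * (y - a) <= (K + e) * (c - a)).
      { assert (0 <= K + e). { pose proof (HK a ltac:(lra)). pose proof (norm_ge_0' (g' a)). lra. }
        apply Rmult_le_compat_l; lra. }
      lra. }
    assert (Hcb' : c = b).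
    { apply NNPP. intros Hne.
      destruct (Hd c ltac:(lra) e He) as [dl [Hdl Hdd]].
      set (y0 := Rmin b (c + dl / 2)).
      assert (Hy0 : c < y0 <= b). { unfold y0. split. apply Rmin_glb_lt; lra. apply Rmin_l. }
      assert (y0 <= c).
      { apply Hub. split. lra. intros y Hy.
        destruct (Rle_dec y c) as [Hyc|Hyc].
        - destruct (Req_dec y c) as [->|Hne2]. auto. apply Hbelow. lra.
        - assert (Hy' : y - c < dl). { unfold y0 in Hy. pose proof (Rmin_r b (c + dl/2)). lra. }
          specialize (Hdd y ltac:(lra) Hy').
          pose proof (norm_split (g y) (g c) (scal (y - c) (g' c))) as Hs.
          rewrite norm_scal_R, Rabs_right in Hs by lra.
          pose proof (HK c ltac:(lra)).
          unfold Q in *. eapply Rle_trans. apply (norm_minus_tri _ (g c)).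
          assert ((y - c) * norm (g' c) <= (y - c) * K) by (apply Rmult_le_compat_l; lra).
          nra. }
      lra. }
    subst c. auto. }
  apply le_eps. intros e He.
  destruct (Req_dec a b) as [->|Hne].
  - rewrite norm_minus_self. lra.
  - specialize (Main (e / (b - a)) ltac:(apply Rdiv_lt_0_compat; lra)).
    replace ((K + e / (b - a)) * (b - a)) with (K * (b - a) + e) in Main by (field; lra). auto.
Qed.

Lemma deriv_cont (h h' : R -> X) a b : 0 <= a -> deriv_nonneg h h' -> cont_within h a b.
Proof.
  intros Ha Hd x Hx eps He.
  destruct (Hd x ltac:(lra) 1 ltac:(lra)) as [d [Hd0 Hdd]].
  set (M := norm (h' x) + 1).
  assert (HM : 0 < M) by (unfold M; pose proof (norm_ge_0' (h' x)); lra).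
  exists (Rmin d (eps / (2 * M))). split.
  { apply Rmin_glb_lt; auto. apply Rdiv_lt_0_compat; lra. }
  intros y Hy Hyx.
  assert (Hyd : Rabs (y - x) < d) by (eapply Rlt_le_trans; [exact Hyx|apply Rmin_l]).
  assert (Hye : Rabs (y - x) < eps / (2 * M)) by (eapply Rlt_le_trans; [exact Hyx|apply Rmin_r]).
  specialize (Hdd y ltac:(lra) Hyd).
  pose proof (norm_split (h y) (h x) (scal (y - x) (h' x))) as Hs.
  rewrite norm_scal_R in Hs.
  assert (Rabs (y - x) * M < eps).
  { apply (Rmult_lt_compat_r M) in Hye; auto. replace (eps / (2 * M) * M) with (eps / 2) in Hye by (field; lra). lra. }
  unfold M in *. pose proof (Rabs_pos (y - x)). nra.
Qed.

Lemma deriv_rderiv (h h' : R -> X) a b : 0 <= a -> deriv_nonneg h h' -> rderiv_within h h' a b.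
Proof.
  intros Ha Hd x Hx eps He.
  destruct (Hd x ltac:(lra) eps He) as [d [Hd0 Hdd]].
  exists d. split; auto. intros y Hy Hyd.
  specialize (Hdd y ltac:(lra) ltac:(rewrite Rabs_right; lra)).
  rewrite Rabs_right in Hdd by lra. auto.
Qed.

Lemma deriv_lip (h h' : R -> X) M : deriv_nonneg h h' -> (forall x, 0 <= x -> norm (h' x) <= M) ->
  forall x y, 0 <= x <= y -> norm (minus (h y) (h x)) <= M * (y - x).
Proof.
  intros Hd HM x y Hxy. apply mvt with (g' := h').
  lra. apply deriv_cont with (h' := h'); auto; lra. apply deriv_rderiv; auto; lra.
  intros z Hz. apply HM. lra.
Qed.

Lemma deriv_lip_abs (h h' : R -> X) M : deriv_nonneg h h' -> (forall x, 0 <= x -> norm (h' x) <= M) ->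
  forall x y, 0 <= x -> 0 <= y -> norm (minus (h y) (h x)) <= M * Rabs (y - x).
Proof.
  intros Hd HM x y Hx Hy. destruct (Rle_dec x y).
  - rewrite Rabs_right by lra. apply (deriv_lip h h'); auto.
  - rewrite Rabs_left1 by lra. rewrite norm_minus_sym.
    replace (- (y - x)) with (x - y) by ring. apply (deriv_lip h h'); auto. lra.
Qed.

End MVT.

Notation "x +' y" := (@plus (AbelianGroup.AbelianMonoid _) x y) (at level 50, left associativity).
Lemma m_def {G : AbelianGroup} (x y : G) : @minus G x y = x +' opp y.
Proof. reflexivity. Qed.
Lemma p_opp_l {G : AbelianGroup} (x : G) : opp x +' x = @zero (AbelianGroup.AbelianMonoid G). Proof. exact (plus_opp_l x). Qed.
Lemma p_opp_r {G : AbelianGroup} (x : G) : x +' opp x = @zero (AbelianGroup.AbelianMonoid G). Proof. exact (plus_opp_r x). Qed.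
Lemma p_zero_r {G : AbelianGroup} (x : G) : x +' zero = x. Proof. exact (plus_zero_r x). Qed.
Lemma p_zero_l {G : AbelianGroup} (x : G) : zero +' x = x. Proof. exact (plus_zero_l x). Qed.
Lemma p_assoc {G : AbelianGroup} (x y z : G) : x +' (y +' z) = (x +' y) +' z. Proof. exact (plus_assoc x y z). Qed.
Lemma p_comm {G : AbelianGroup} (x y : G) : x +' y = y +' x. Proof. exact (plus_comm x y). Qed.
Lemma o_plus {G : AbelianGroup} (x y : G) : opp (x +' y) = opp x +' opp y. Proof. exact (opp_plus x y). Qed.
Lemma o_opp {G : AbelianGroup} (x : G) : opp (opp x) = x. Proof. exact (opp_opp x). Qed.
Lemma pswap {G : AbelianGroup} (a b c : G) : (a +' b) +' c = (a +' c) +' b.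
Proof. rewrite <- !p_assoc, (p_comm b). auto. Qed.
Lemma pcancel1 {G : AbelianGroup} (a x : G) : (a +' opp x) +' x = a.
Proof. rewrite <- p_assoc, p_opp_l, p_zero_r. auto. Qed.
Lemma pcancel2 {G : AbelianGroup} (a x : G) : (a +' x) +' opp x = a.
Proof. rewrite <- p_assoc, p_opp_r, p_zero_r. auto. Qed.
Ltac gnorm := repeat rewrite m_def; repeat rewrite o_plus; repeat rewrite o_opp; repeat rewrite p_assoc.
Lemma gI1 {G : AbelianGroup} (Hy Hz Zv Dv Dh : G) :
  minus (minus Hy (Zv +' Dv)) ((minus Hz Zv) +' (minus Dh Dv)) = minus Hy (Hz +' Dh).
Proof.
  gnorm. rewrite (pswap _ (opp Zv)), (pswap _ (opp Zv)), pcancel1.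
  rewrite (pswap _ (opp Dv)), (pswap _ (opp Dv)), pcancel1. auto.
Qed.
Lemma gI3 {G : AbelianGroup} (Hy Hz Zv Dv : G) :
  minus (minus Hy (Zv +' Dv)) (minus Hz Zv) = minus (minus Hy Hz) Dv.
Proof.
  gnorm. rewrite (pswap _ (opp Zv)), (pswap _ (opp Zv)), pcancel1. apply pswap.
Qed.
Lemma gI4 {G : AbelianGroup} (a b c : G) : minus a (b +' c) = minus (minus a b) c.
Proof. gnorm. auto. Qed.
Lemma gI5 {G : AbelianGroup} (a b c d : G) : minus (a +' b) (c +' d) = (minus a c) +' (minus b d).
Proof. gnorm. rewrite (pswap _ b). auto. Qed.
Lemma gI6 {G : AbelianGroup} (a b : G) : (minus a b) +' b = a.
Proof. gnorm. apply pcancel1. Qed.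
Lemma gI7 {G : AbelianGroup} (a b c : G) : minus (a +' b) c = a +' (minus b c).
Proof. gnorm. auto. Qed.

Section XAlg.
Context {X : CompleteNormedModule R_AbsRing}.
Lemma xI1 (Hy Hz Zv Dv Dh : X) :
  minus (minus Hy (plus Zv Dv)) (plus (minus Hz Zv) (minus Dh Dv)) = minus Hy (plus Hz Dh).
Proof. exact (gI1 Hy Hz Zv Dv Dh). Qed.
Lemma xI3 (Hy Hz Zv Dv : X) : minus (minus Hy (plus Zv Dv)) (minus Hz Zv) = minus (minus Hy Hz) Dv.
Proof. exact (gI3 Hy Hz Zv Dv). Qed.
Lemma xI4 (a b c : X) : minus a (plus b c) = minus (minus a b) c.
Proof. exact (gI4 a b c). Qed.
Lemma xI5 (a b c d : X) : minus (plus a b) (plus c d) = plus (minus a c) (minus b d).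
Proof. exact (gI5 a b c d). Qed.
Lemma xI6 (a b : X) : plus (minus a b) b = a.
Proof. exact (gI6 a b). Qed.
Lemma xI7 (a b c : X) : minus (plus a b) c = plus a (minus b c).
Proof. exact (gI7 a b c). Qed.
Lemma sc_Rplus (a b : R) (v : X) : scal (a + b) v = plus (scal a v) (scal b v).
Proof. exact (scal_distr_r a b v). Qed.
Lemma sc_opp (a : R) (v : X) : scal (- a) v = opp (scal a v).
Proof. exact (scal_opp_l a v). Qed.
Lemma sc_Rminus (a b : R) (v : X) : scal (a - b) v = minus (scal a v) (scal b v).
Proof. unfold Rminus. rewrite sc_Rplus, sc_opp. reflexivity. Qed.
Lemma sc_plus_l (a : R) (u v : X) : scal a (plus u v) = plus (scal a u) (scal a v).
Proof. exact (scal_distr_l a u v). Qed.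
Lemma sc_opp_r (a : R) (u : X) : scal a (opp u) = opp (scal a u).
Proof. exact (scal_opp_r a u). Qed.
Lemma sc_minus_l (a : R) (u v : X) : scal a (minus u v) = minus (scal a u) (scal a v).
Proof. change (minus u v) with (plus u (opp v)). rewrite sc_plus_l, sc_opp_r. reflexivity. Qed.
Lemma sc_assoc (a b : R) (v : X) : scal a (scal b v) = scal (a * b) v.
Proof. exact (scal_assoc a b v). Qed.
Lemma sc_one (v : X) : scal 1 v = v.
Proof. exact (scal_one v). Qed.
Lemma sc_zero (v : X) : scal 0 v = zero.
Proof. exact (scal_zero_l v). Qed.
End XAlg.

Section Taylor.
Context {X : CompleteNormedModule R_AbsRing}.

Lemma lin_diff (h : R -> X) (v : X) a b :
  minus (minus (h b) (scal b v)) (minus (h a) (scal a v)) = minus (minus (h b) (h a)) (scal (b - a) v).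
Proof.
  replace (scal b v) with (plus (scal a v) (scal (b - a) v)).
  apply xI3. rewrite <- sc_Rplus. f_equal. ring.
Qed.

Lemma taylor (h h' h'' : R -> X) M2 : deriv_nonneg h h' -> deriv_nonneg h' h'' ->
  (forall x, 0 <= x -> norm (h'' x) <= M2) ->
  forall x y, 0 <= x -> 0 <= y ->
    norm (minus (h y) (plus (h x) (scal (y - x) (h' x)))) <= M2 * (y - x) ^ 2.
Proof.
  intros Hd1 Hd2 HM2 x y Hx Hy.
  set (v := h' x).
  set (g := fun z => minus (h z) (scal z v)).
  set (G := fun z => minus (h' z) v).
  assert (HG : forall z, 0 <= z -> norm (G z) <= M2 * Rabs (z - x)).
  { intros z Hz. unfold G, v. apply (deriv_lip_abs h' h''); auto. }
  assert (Hcont : forall a b, 0 <= a -> cont_within g a b).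
  { intros a b Ha z Hz eps He.
    destruct (deriv_cont h h' a b Ha Hd1 z Hz (eps / 2) ltac:(lra)) as [d [Hd Hdd]].
    set (K := norm v + 1).
    assert (HK : 0 < K) by (unfold K; pose proof (norm_ge_0' v); lra).
    exists (Rmin d (eps / (2 * K))). split. apply Rmin_glb_lt; auto. apply Rdiv_lt_0_compat; lra.
    intros w Hw Hwz.
    assert (H1 : Rabs (w - z) < d) by (eapply Rlt_le_trans; [exact Hwz|apply Rmin_l]).
    assert (H2 : Rabs (w - z) < eps / (2 * K)) by (eapply Rlt_le_trans; [exact Hwz|apply Rmin_r]).
    specialize (Hdd w Hw H1). unfold g. rewrite lin_diff.
    eapply Rle_lt_trans. apply norm_minus_le. rewrite norm_scal_R.
    assert (Rabs (w - z) * K <= eps / 2).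
    { apply Rlt_le in H2. apply (Rmult_le_compat_r K) in H2; [|lra]. replace (eps / (2 * K) * K) with (eps / 2) in H2 by (field; lra). lra. }
    unfold K in *. pose proof (Rabs_pos (w - z)). nra. }
  assert (Hrd : forall a b, 0 <= a -> rderiv_within g G a b).
  { intros a b Ha z Hz eps He.
    destruct (deriv_rderiv h h' a b Ha Hd1 z Hz eps He) as [d [Hd Hdd]].
    exists d. split; auto. intros w Hw Hwd. specialize (Hdd w Hw Hwd).
    unfold g, G. cbv beta.
    replace (scal w v) with (plus (scal z v) (scal (w - z) v)).
    2:{ rewrite <- sc_Rplus. f_equal. ring. }
    rewrite sc_minus_l. apply Rle_trans with (norm (minus (h w) (plus (h z) (scal (w - z) (h' z))))); [apply Req_le; f_equal; apply xI1|]. auto. }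
  assert (Hfin : minus (h y) (plus (h x) (scal (y - x) v)) = minus (g y) (g x)).
  { unfold g. rewrite lin_diff. apply xI4. }
  fold v. rewrite Hfin.
  destruct (Rle_dec x y) as [Hxy|Hxy].
  - eapply Rle_trans. apply (mvt g G x y (M2 * Rabs (y - x))); auto.
    intros z Hz. eapply Rle_trans. apply HG. lra.
    assert (0 <= M2). { pose proof (HM2 x Hx). pose proof (norm_ge_0' (h'' x)). lra. }
    apply Rmult_le_compat_l; auto. rewrite !Rabs_right; lra.
    rewrite Rabs_right by lra. lra.
  - rewrite norm_minus_sym.
    eapply Rle_trans. apply (mvt g G y x (M2 * Rabs (y - x))); auto. lra.
    intros z Hz. eapply Rle_trans. apply HG. lra.
    assert (0 <= M2). { pose proof (HM2 x Hx). pose proof (norm_ge_0' (h'' x)). lra. }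
    apply Rmult_le_compat_l; auto. rewrite !Rabs_left1; lra.
    rewrite Rabs_left1 by lra. nra.
Qed.

End Taylor.

Lemma xE {X : CompleteNormedModule R_AbsRing} (a b c : X) (d : R) : d <> 0 ->
  minus a (plus b (scal d c)) = scal d (minus (scal (/ d) (minus a b)) c).
Proof.
  intros Hd. symmetry. etransitivity. apply sc_minus_l.
  etransitivity. 2:{ symmetry; apply xI4. }
  f_equal. etransitivity. apply sc_assoc. replace (d * / d) with 1 by (field; auto). apply sc_one.
Qed.

Section Gen.
Context {X : CompleteNormedModule R_AbsRing} (S : R -> X -> X) (HS : C0_semigroup S).

Lemma at_right_eps (f : R -> X) (l : X) : filterlim f (at_right 0) (locally l) ->
  forall eps, 0 < eps -> exists d, 0 < d /\ forall t, 0 < t < d -> norm (minus (f t) l) < eps.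
Proof.
  intros Hf eps He.
  assert (Hf' := proj1 (@filterlim_locally _ _ (at_right 0) (@filter_filter _ _ (at_right_proper_filter 0)) _ _) Hf).
  assert (Hnf := @nf_pos X).
  specialize (Hf' (mkposreal (eps / @norm_factor R_AbsRing X) ltac:(apply Rdiv_lt_0_compat; auto))).
  destruct Hf' as [d Hd]. exists d. split. apply cond_pos. intros t [Ht0 Htd].
  assert (H : ball l (eps / @norm_factor R_AbsRing X) (f t)).
  { apply Hd. change (Rabs (t - 0) < d). rewrite Rabs_right; lra. auto. }
  apply (ball_norm_lt l (f t) (mkposreal _ (Rdiv_lt_0_compat _ _ He Hnf))) in H. simpl in H.
  replace eps with (@norm_factor R_AbsRing X * (eps / @norm_factor R_AbsRing X)) by (field; lra). auto.
Qed.

Lemma S_gen_lip (v w : X) T M : generator S v w -> 0 <= M ->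
  (forall t, 0 <= t <= T -> forall x, norm (S t x) <= M * norm x) ->
  forall s, 0 <= s <= T -> norm (minus (S s v) v) <= M * norm w * s.
Proof.
  intros Hg HM0 HM s Hs.
  replace (minus (S s v) v) with (minus (S s v) (S 0 v)) by (rewrite (S_0 S HS); auto).
  replace (M * norm w * s) with (M * norm w * (s - 0)) by ring.
  apply (mvt (fun u => S u v) (fun u => S u w) 0 s (M * norm w)). lra.
  - intros z Hz eps He. destruct (S_strong_cont S HS v z ltac:(lra) eps He) as [d [Hd Hdd]].
    exists d. split; auto. intros y Hy Hyz. apply Hdd; lra.
  - intros z Hz eps He.
    set (e' := eps / (M + 1)).
    assert (He' : 0 < e') by (unfold e'; apply Rdiv_lt_0_compat; lra).
    destruct (at_right_eps _ _ Hg e' He') as [d [Hd Hdd]].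
    exists d. split; auto. intros y Hy Hyd.
    set (dd := y - z).
    assert (Hdd' := Hdd dd ltac:(unfold dd; lra)).
    replace y with (z + dd) by (unfold dd; ring).
    rewrite (S_comp S HS) by (unfold dd; lra).
    replace (z + dd - z) with dd by ring.
    rewrite <- (S_scal S HS), <- (S_plus S HS), <- (S_minus S HS) by lra.
    eapply Rle_trans. apply HM. unfold dd; lra.
    assert (E : minus (S dd v) (plus v (scal dd w)) = scal dd (minus (scal (/ dd) (minus (S dd v) v)) w)).
    { apply xE. unfold dd; lra. }
    match goal with |- context [norm ?t] => replace (norm t) with (norm (scal dd (minus (scal (/ dd) (minus (S dd v) v)) w))) by (f_equal; symmetry; apply E) end.
    rewrite norm_scal_R, Rabs_right by (unfold dd; lra).
    assert (0 <= norm (minus (scal (/ dd) (minus (S dd v) v)) w)) by apply norm_ge_0'.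
    assert (M * (dd * norm (minus (scal (/ dd) (minus (S dd v) v)) w)) <= (M + 1) * (dd * e')).
    { assert (H1 : dd * norm (minus (scal (/ dd) (minus (S dd v) v)) w) <= dd * e').
      { apply Rmult_le_compat_l. unfold dd; lra. left. exact Hdd'. }
      assert (0 <= dd * norm (minus (scal (/ dd) (minus (S dd v) v)) w)) by (apply Rmult_le_pos; [unfold dd; lra|apply norm_ge_0']).
      nra. }
    replace ((M + 1) * (dd * e')) with (eps * dd) in H0 by (unfold e'; field; lra). auto.
  - intros z Hz. apply HM. lra.
Qed.
End Gen.

Lemma Rpower_one_l y : Rpower 1 y = 1.
Proof. unfold Rpower. rewrite ln_1, Rmult_0_r. apply exp_0. Qed.

Lemma Rpower_pos x y : 0 < Rpower x y.
Proof. unfold Rpower. apply exp_pos. Qed.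

Lemma rpow_pos_eq x r : 0 < x -> rpow x r = Rpower x r.
Proof. intros H. unfold rpow. destruct Rle_dec; [lra|auto]. Qed.

Lemma rpow_0 r : rpow 0 r = 0.
Proof. unfold rpow. destruct Rle_dec; [auto|lra]. Qed.

Lemma rpow_ge0 x r : 0 <= rpow x r.
Proof. unfold rpow. destruct Rle_dec. lra. left. apply Rpower_pos. Qed.

Lemma rpow_mono x y r : 0 <= r -> 0 <= x <= y -> rpow x r <= rpow y r.
Proof.
  intros Hr Hxy. destruct (Req_dec x 0) as [->|Hx].
  - rewrite rpow_0. apply rpow_ge0.
  - rewrite !rpow_pos_eq by lra. apply Rle_Rpower_l; lra.
Qed.

Lemma Rpower_neg_decr a b e : e <= 0 -> 0 < a <= b -> Rpower b e <= Rpower a e.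
Proof.
  intros He Hab. replace e with (- (- e)) by ring. rewrite (Rpower_Ropp b (- e)), (Rpower_Ropp a (- e)).
  apply Rinv_le_contravar. apply Rpower_pos. apply Rle_Rpower_l; lra.
Qed.

Lemma Rpower_ge_self p r : 0 < p <= 1 -> 0 < r <= 1 -> p <= Rpower p r.
Proof.
  intros Hp Hr. replace r with (1 + (r - 1)) by ring. rewrite Rpower_plus, Rpower_1 by lra.
  assert (1 <= Rpower p (r - 1)).
  { assert (H : Rpower 1 (r - 1) <= Rpower p (r - 1)) by (apply Rpower_neg_decr; lra).
    rewrite Rpower_one_l in H. exact H. }
  nra.
Qed.

Lemma rpow_subadd x y r : 0 < r <= 1 -> 0 <= x -> 0 <= y -> rpow (x + y) r <= rpow x r + rpow y r.
Proof.
  intros Hr Hx Hy.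
  destruct (Req_dec x 0) as [->|Hx0]. rewrite Rplus_0_l, rpow_0. lra.
  destruct (Req_dec y 0) as [->|Hy0]. rewrite Rplus_0_r, rpow_0. lra.
  rewrite !rpow_pos_eq by lra.
  set (s := x + y).
  assert (Hs : 0 < s) by (unfold s; lra).
  assert (E1 : x = s * (x / s)) by (field; lra).
  assert (E2 : y = s * (y / s)) by (field; lra).
  assert (H1 : x / s <= Rpower (x / s) r).
  { apply Rpower_ge_self; auto. split. apply Rdiv_lt_0_compat; lra.
    apply (Rmult_le_reg_r s); auto. unfold Rdiv. rewrite Rmult_assoc, Rinv_l; unfold s; lra. }
  assert (H2 : y / s <= Rpower (y / s) r).
  { apply Rpower_ge_self; auto. split. apply Rdiv_lt_0_compat; lra.
    apply (Rmult_le_reg_r s); auto. unfold Rdiv. rewrite Rmult_assoc, Rinv_l; unfold s; lra. }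
  rewrite E1 at 1. rewrite E2 at 1.
  rewrite <- !Rpower_mult_distr; try lra; try (apply Rdiv_lt_0_compat; lra).
  assert (x / s + y / s = 1) by (unfold s; field; lra).
  pose proof (Rpower_pos s r). nra.
Qed.

Lemma rpow_holder x y r : 0 < r <= 1 -> 0 <= x <= y -> rpow y r - rpow x r <= rpow (y - x) r.
Proof.
  intros Hr Hxy. pose proof (rpow_subadd x (y - x) r Hr ltac:(lra) ltac:(lra)).
  replace (x + (y - x)) with y in H by ring. lra.
Qed.

(* concavity: decreasing increments *)
Lemma rpow_incr_decr x y d r : 0 < r < 1 -> 0 <= x <= y -> 0 <= d ->
  rpow (y + d) r - rpow y r <= rpow (x + d) r - rpow x r.
Proof.
  intros Hr Hxy Hd.
  destruct (Req_dec d 0) as [->|Hd0]. rewrite !Rplus_0_r. lra.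
  destruct (Req_dec x 0) as [->|Hx0].
  { rewrite Rplus_0_l, rpow_0. pose proof (rpow_subadd y d r ltac:(lra) ltac:(lra) ltac:(lra)). lra. }
  destruct (Req_dec x y) as [->|Hxy0]. lra.
  rewrite !rpow_pos_eq by lra.
  set (F := fun z => Rpower (z + d) r - Rpower z r).
  set (F' := fun z => r * Rpower (z + d) (r - 1) - r * Rpower z (r - 1)).
  destruct (MVT_cor2 F F' x y) as [c [Hc1 Hc2]]. lra.
  { intros c Hc. unfold F, F'. apply derivable_pt_lim_minus.
    - replace (r * Rpower (c + d) (r - 1)) with (r * Rpower (c + d) (r - 1) * 1) by ring.
      apply (derivable_pt_lim_comp (fun z => z + d) (fun z => Rpower z r)).
      replace 1 with (1 + 0) by ring. apply derivable_pt_lim_plus. apply derivable_pt_lim_id.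
      apply derivable_pt_lim_const. apply derivable_pt_lim_power. lra.
    - apply derivable_pt_lim_power. lra. }
  unfold F, F' in Hc1.
  assert (Rpower (c + d) (r - 1) <= Rpower c (r - 1)) by (apply Rpower_neg_decr; lra).
  assert (H3 : r * Rpower (c + d) (r - 1) - r * Rpower c (r - 1) <= 0).
  { apply Rmult_le_compat_l with (r := r) in H; lra. }
  assert (H4 : (r * Rpower (c + d) (r - 1) - r * Rpower c (r - 1)) * (y - x) <= 0).
  { rewrite <- (Rmult_0_l (y - x)). apply Rmult_le_compat_r; lra. }
  lra.
Qed.

Lemma rpow_small r : 0 < r -> forall eps, 0 < eps -> exists delta, 0 < delta /\
  forall d, 0 <= d < delta -> rpow d r < eps.
Proof.
  intros Hr eps He. exists (Rpower eps (/ r)). split. apply Rpower_pos.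
  intros d [Hd0 Hd1]. destruct (Req_dec d 0) as [->|Hd].
  - rewrite rpow_0. auto.
  - rewrite rpow_pos_eq by lra.
    replace eps with (Rpower (Rpower eps (/ r)) r).
    apply Rlt_Rpower_l; lra.
    rewrite Rpower_mult. replace (/ r * r) with 1 by (field; lra). apply Rpower_1; auto.
Qed.

Definition clamp (a b s : R) := Rmax a (Rmin b s).

Lemma clamp_in a b s : a <= b -> a <= clamp a b s <= b.
Proof. intros. unfold clamp. unfold Rmax, Rmin. repeat destruct Rle_dec; lra. Qed.

Lemma clamp_lip a b x y : a <= b -> Rabs (clamp a b y - clamp a b x) <= Rabs (y - x).
Proof.
  intros. unfold clamp, Rmax, Rmin. repeat destruct Rle_dec; unfold Rabs; repeat destruct Rcase_abs; lra.
Qed.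

Lemma clamp_id a b s : a <= s <= b -> clamp a b s = s.
Proof. intros. unfold clamp, Rmax, Rmin. repeat destruct Rle_dec; lra. Qed.

Lemma ex_RInt_cw {V : CompleteNormedModule R_AbsRing} (f : R -> V) a b :
  a <= b -> cont_within f a b -> ex_RInt f a b.
Proof.
  intros Hab Hc.
  apply ex_RInt_ext with (f := fun s => f (clamp a b s)).
  { intros x Hx. rewrite Rmin_left, Rmax_right in Hx by lra. rewrite clamp_id; auto; lra. }
  apply ex_RInt_continuous. intros z _.
  apply (proj2 (filterlim_locally _ _)). intros eps.
  destruct (Hc (clamp a b z) (clamp_in a b z Hab) eps (cond_pos eps)) as [d [Hd Hdd]].
  exists (mkposreal d Hd). intros y Hy. apply norm_lt_ball. apply Hdd. apply clamp_in; auto.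
  eapply Rle_lt_trans. apply clamp_lip; auto. exact Hy.
Qed.

Lemma is_RInt_shift {V : NormedModule R_AbsRing} (f : R -> V) a b c l :
  is_RInt f a b l -> is_RInt (fun s => f (s - c)) (a + c) (b + c) l.
Proof.
  intros H.
  apply (is_RInt_ext (fun y => scal 1 (f (1 * y + - c)))).
  { intros x _. replace (1 * x + - c) with (x - c) by ring. apply scal1_R. }
  apply is_RInt_comp_lin. replace (1 * (a + c) + - c) with a by ring.
  replace (1 * (b + c) + - c) with b by ring. auto.
Qed.

Lemma rpow_diff_abs x y r : 0 < r <= 1 -> 0 <= x -> 0 <= y ->
  Rabs (rpow y r - rpow x r) <= rpow (Rabs (y - x)) r.
Proof.
  intros Hr Hx Hy. destruct (Rle_dec x y).
  - rewrite !Rabs_right. apply rpow_holder; lra. lra.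
    pose proof (rpow_mono x y r ltac:(lra) ltac:(lra)). lra.
  - rewrite Rabs_left1, (Rabs_left1 (y - x)) by (try lra; pose proof (rpow_mono y x r ltac:(lra) ltac:(lra)); lra).
    replace (- (rpow y r - rpow x r)) with (rpow x r - rpow y r) by ring.
    replace (- (y - x)) with (x - y) by ring. apply rpow_holder; lra.
Qed.

Section CW.
Context {X : CompleteNormedModule R_AbsRing} (S : R -> X -> X) (HS : C0_semigroup S).

Lemma cw_S (g : R -> X) t M : 0 <= t -> 0 <= M ->
  (forall s, 0 <= s <= t -> forall x, norm (S s x) <= M * norm x) ->
  cont_within g 0 t -> cont_within (fun s => S (t - s) (g s)) 0 t.
Proof.
  intros Ht HM0 HM Hg x Hx eps He.
  destruct (Hg x Hx (eps / (2 * (M + 1))) ltac:(apply Rdiv_lt_0_compat; lra)) as [d1 [Hd1 Hdd1]].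
  destruct (S_strong_cont S HS (g x) (t - x) ltac:(lra) (eps / 2) ltac:(lra)) as [d2 [Hd2 Hdd2]].
  exists (Rmin d1 d2). split. apply Rmin_glb_lt; auto.
  intros y Hy Hyx.
  assert (H1 : Rabs (y - x) < d1) by (eapply Rlt_le_trans; [exact Hyx|apply Rmin_l]).
  assert (H2 : Rabs (y - x) < d2) by (eapply Rlt_le_trans; [exact Hyx|apply Rmin_r]).
  eapply Rle_lt_trans. apply (norm_minus_tri _ (S (t - y) (g x))).
  rewrite <- (S_minus S HS) by lra.
  assert (A1 : norm (S (t - y) (minus (g y) (g x))) <= M * (eps / (2 * (M + 1)))).
  { eapply Rle_trans. apply HM; lra. apply Rmult_le_compat_l; auto. left. apply Hdd1; auto. }
  assert (A2 : norm (minus (S (t - y) (g x)) (S (t - x) (g x))) < eps / 2).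
  { apply Hdd2. lra. replace (t - y - (t - x)) with (- (y - x)) by ring. rewrite Rabs_Ropp. auto. }
  assert (M * (eps / (2 * (M + 1))) <= eps / 2).
  { replace (M * (eps / (2 * (M + 1)))) with ((eps / 2) * (M / (M + 1))) by (field; lra).
    assert (M / (M + 1) <= 1). { apply (Rmult_le_reg_r (M + 1)). lra. unfold Rdiv. rewrite Rmult_assoc, Rinv_l; lra. }
    assert (0 <= M / (M + 1)) by (apply Rmult_le_pos; [lra|left; apply Rinv_0_lt_compat; lra]).
    nra. }
  lra.
Qed.

End CW.

Lemma cw_const {X : CompleteNormedModule R_AbsRing} (v : X) a b : cont_within (fun _ => v) a b.
Proof.
  intros x Hx eps He. exists 1. split. lra. intros. rewrite norm_minus_self. auto.
Qed.

Lemma cw_hrpow {X : CompleteNormedModule R_AbsRing} (h : R -> X) L r c t :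
  0 < r <= 1 -> 0 <= c -> 0 <= L ->
  (forall x y, 0 <= x -> 0 <= y -> norm (minus (h y) (h x)) <= L * Rabs (y - x)) ->
  cont_within (fun u => h (rpow (c + u) r)) 0 t.
Proof.
  intros Hr Hc HL Hh x Hx eps He.
  destruct (rpow_small r ltac:(lra) (eps / (L + 1)) ltac:(apply Rdiv_lt_0_compat; lra)) as [d [Hd Hdd]].
  exists d. split; auto. intros y Hy Hyx.
  eapply Rle_lt_trans. apply Hh; apply rpow_ge0.
  eapply Rle_lt_trans. apply Rmult_le_compat_l; auto. apply rpow_diff_abs; lra.
  replace (c + y - (c + x)) with (y - x) by ring.
  assert (Hs := Hdd (Rabs (y - x)) ltac:(split; [apply Rabs_pos|auto])).
  pose proof (rpow_ge0 (Rabs (y - x)) r).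
  apply Rle_lt_trans with ((L + 1) * rpow (Rabs (y - x)) r). nra.
  apply (Rmult_lt_compat_l (L + 1)) in Hs; [|lra].
  replace ((L + 1) * (eps / (L + 1))) with eps in Hs by (field; lra). auto.
Qed.

Lemma cw_rpow_R r c m t : 0 < r <= 1 -> 0 <= c ->
  @cont_within R_CompleteNormedModule (fun u => rpow (c + u) r - m) 0 t.
Proof.
  intros Hr Hc x Hx eps He.
  destruct (rpow_small r ltac:(lra) eps He) as [d [Hd Hdd]].
  exists d. split; auto. intros y Hy Hyx.
  change (Rabs ((rpow (c + y) r - m) - (rpow (c + x) r - m)) < eps).
  replace ((rpow (c + y) r - m) - (rpow (c + x) r - m)) with (rpow (c + y) r - rpow (c + x) r) by ring.
  eapply Rle_lt_trans. apply rpow_diff_abs; lra.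
  replace (c + y - (c + x)) with (y - x) by ring. apply Hdd. split. apply Rabs_pos. auto.
Qed.

Lemma Rneg_neg (z : R) : z = -1 * (- z).
Proof. ring. Qed.

Lemma midpoint_bound (phi : R -> R) tau m D : 0 < tau ->
  @cont_within R_CompleteNormedModule (fun u => phi u - m) 0 tau ->
  (forall u, 0 <= u <= tau / 2 -> 0 <= 2 * m - phi u - phi (tau - u) <= D) ->
  Rabs (RInt (fun u => phi u - m) 0 tau) <= tau / 2 * D.
Proof.
  intros Ht Hc Hb.
  set (f := fun u => phi u - m).
  assert (Hex : ex_RInt f 0 tau) by (apply (@ex_RInt_cw R_CompleteNormedModule); auto; lra).
  assert (Hex1 : ex_RInt f 0 (tau / 2)) by (apply (@ex_RInt_Chasles_1 R_CompleteNormedModule f 0 (tau/2) tau); auto; lra).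
  assert (Hex2 : ex_RInt f (tau / 2) tau) by (apply (@ex_RInt_Chasles_2 R_CompleteNormedModule f 0 (tau/2) tau); auto; lra).
  rewrite <- (@RInt_Chasles R_CompleteNormedModule f 0 (tau / 2) tau Hex1 Hex2).
  set (I1 := RInt f 0 (tau / 2)). set (I2 := RInt f (tau / 2) tau).
  assert (H1 : is_RInt f 0 (tau / 2) I1) by (apply (@RInt_correct R_CompleteNormedModule); auto).
  assert (H2 : is_RInt f (tau / 2) tau I2) by (apply (@RInt_correct R_CompleteNormedModule); auto).
  assert (H2' : is_RInt (fun u => f (tau - u)) 0 (tau / 2) I2).
  { apply is_RInt_swap in H2.
    assert (H3 := is_RInt_comp_lin f (-1) tau 0 (tau / 2) (opp I2)).
    replace (-1 * 0 + tau) with tau in H3 by ring.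
    replace (-1 * (tau / 2) + tau) with (tau / 2) in H3 by field.
    specialize (H3 H2). apply (is_RInt_scal _ _ _ (-1)) in H3.
    assert (H4 : is_RInt (fun y => scal (-1) (scal (-1) (f (-1 * y + tau)))) 0 (tau / 2) I2).
    { replace I2 with (scal (-1) (opp I2)) by (first [apply Rneg_neg | symmetry; apply Rneg_neg]). exact H3. }
    eapply is_RInt_ext. 2: exact H4.
    intros x _. change (-1 * (-1 * f (-1 * x + tau)) = f (tau - x)).
    replace (-1 * x + tau) with (tau - x) by ring. ring. }
  assert (Hs : is_RInt (fun u => f u + f (tau - u)) 0 (tau / 2) (I1 + I2)).
  { exact (is_RInt_plus _ _ _ _ _ _ H1 H2'). }
  assert (HB : forall x, 0 <= x <= tau / 2 -> norm (f x + f (tau - x)) <= D).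
  { intros x Hx. change (Rabs (f x + f (tau - x)) <= D). unfold f.
    specialize (Hb x Hx). rewrite Rabs_left1 by lra. lra. }
  pose proof (norm_RInt_le_const _ 0 (tau / 2) _ D ltac:(lra) HB Hs) as Hn.
  change (Rabs (I1 + I2) <= (tau / 2 - 0) * D) in Hn.
  change (plus I1 I2) with (I1 + I2). lra.
Qed.

Lemma cw_ext {X : CompleteNormedModule R_AbsRing} (f g : R -> X) a b :
  (forall x, f x = g x) -> cont_within f a b -> cont_within g a b.
Proof.
  intros E Hf x Hx eps He. destruct (Hf x Hx eps He) as [d [Hd Hdd]].
  exists d. split; auto. intros y Hy Hyx. rewrite <- !E. auto.
Qed.

Lemma xI8 {X : CompleteNormedModule R_AbsRing} (a b c : X) : plus a (plus b c) = plus (plus a b) c.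
Proof. exact (plus_assoc a b c). Qed.

Section Main.
Context {X : CompleteNormedModule R_AbsRing} (S : R -> X -> X) (HS : C0_semigroup S).
Context (h : R -> X) (r c1 L : R) (Hr : 0 < r < 1) (HL : 0 <= L)
  (Hh : forall x y, 0 <= x -> 0 <= y -> norm (minus (h y) (h x)) <= L * Rabs (y - x)).

Lemma ex_S_int (g : R -> X) t : 0 <= t -> cont_within g 0 t ->
  ex_RInt (fun s => S (t - s) (g s)) 0 t.
Proof.
  intros Ht Hg. destruct (S_bound_T S HS t) as [M [HM1 HM]].
  apply ex_RInt_cw; auto. apply (cw_S S HS g t M); auto; lra.
Qed.

Lemma cw_h0 t : cont_within (fun s => h (rpow s r)) 0 t.
Proof.
  apply cw_ext with (f := fun u => h (rpow (0 + u) r)).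
  intros x. rewrite Rplus_0_l. auto.
  apply (cw_hrpow h L r 0 t); auto; lra.
Qed.

Lemma rec_step (tau : R) (k : nat) (y0 : X) : 0 < tau ->
  minus (mild_sol S h r y0 (INR (Datatypes.S k) * tau)) (EQRF1 S h r y0 tau c1 (Datatypes.S k)) =
  plus (S tau (minus (mild_sol S h r y0 (INR k * tau)) (EQRF1 S h r y0 tau c1 k)))
       (minus (RInt (fun u => S (tau - u) (h (rpow (INR k * tau + u) r))) 0 tau)
              (tau_phi1 S tau (h (rpow (INR k * tau + c1 * tau) r)))).
Proof.
  intros Htau.
  set (tk := INR k * tau).
  assert (Htk : 0 <= tk) by (unfold tk; pose proof (pos_INR k); nra).
  assert (Ht1 : INR (Datatypes.S k) * tau = tau + tk) by (unfold tk; rewrite S_INR; ring).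
  set (F := fun t s => S (t - s) (h (rpow s r))).
  set (G := fun u => S (tau - u) (h (rpow (tk + u) r))).
  assert (HexF : forall t, 0 <= t -> ex_RInt (F t) 0 t).
  { intros t Ht. apply ex_S_int; auto. apply cw_h0. }
  assert (HexG : ex_RInt G 0 tau).
  { apply ex_S_int. lra. apply (cw_hrpow h L r tk tau); auto; lra. }
  assert (HA : is_RInt (F (tau + tk)) 0 tk (S tau (RInt (F tk) 0 tk))).
  { assert (H := is_RInt_L (S tau) (fun x y => S_plus S HS tau x y ltac:(lra))
                 (fun a x => S_scal S HS tau a x ltac:(lra)) (S_bdd S HS tau ltac:(lra))
                 (F tk) 0 tk _ (RInt_correct _ _ _ (HexF tk Htk))).
    eapply is_RInt_ext. 2: exact H.
    intros x Hx. rewrite Rmin_left, Rmax_right in Hx by lra. unfold F.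
    rewrite <- (S_comp S HS) by lra. f_equal. ring. }
  assert (HB : is_RInt (F (tau + tk)) tk (tau + tk) (RInt G 0 tau)).
  { assert (H := is_RInt_shift G 0 tau tk _ (RInt_correct _ _ _ HexG)).
    rewrite Rplus_0_l in H. eapply is_RInt_ext. 2: exact H.
    intros x Hx. unfold G, F. f_equal. ring. f_equal. f_equal. ring. }
  assert (HC := is_RInt_Chasles _ _ _ _ _ _ HA HB).
  apply is_RInt_unique in HC.
  unfold mild_sol at 1. rewrite Ht1.
  change (RInt (fun s => S (tau + tk - s) (h (rpow s r))) 0 (tau + tk)) with (RInt (F (tau + tk)) 0 (tau + tk)).
  rewrite HC.
  rewrite (S_comp S HS) by lra.
  simpl EQRF1. fold tk.
  unfold mild_sol. fold (F tk).
  rewrite (S_minus S HS), (S_plus S HS) by lra.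
  etransitivity; [|apply xI5]. f_equal. apply xI8.
Qed.
End Main.

Lemma abs_in_range a b lo hi : lo <= a <= hi -> lo <= b <= hi -> Rabs (a - b) <= hi - lo.
Proof. intros. unfold Rabs. destruct Rcase_abs; lra. Qed.

Lemma norm_tri' {X : CompleteNormedModule R_AbsRing} (a b : X) : norm (plus a b) <= norm a + norm b.
Proof. exact (norm_triangle a b). Qed.

Section Delta.
Context {X : CompleteNormedModule R_AbsRing} (S : R -> X -> X) (HS : C0_semigroup S).
Context (h : R -> X) (r L : R) (Hr : 0 < r < 1) (HL : 0 <= L)
  (Hh : forall x y, 0 <= x -> 0 <= y -> norm (minus (h y) (h x)) <= L * Rabs (y - x)).

Lemma delta_int tau tk (m : R) : 0 < tau -> 0 <= tk ->
  is_RInt (fun u => S (tau - u) (minus (h (rpow (tk + u) r)) (h m))) 0 tau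
    (minus (RInt (fun u => S (tau - u) (h (rpow (tk + u) r))) 0 tau) (tau_phi1 S tau (h m))).
Proof.
  intros Htau Htk.
  assert (HexG : ex_RInt (fun u => S (tau - u) (h (rpow (tk + u) r))) 0 tau).
  { apply (ex_S_int S HS). lra. apply (cw_hrpow h L r tk tau); auto; lra. }
  assert (HexC : ex_RInt (fun u => S (tau - u) (h m)) 0 tau).
  { apply (ex_S_int S HS (fun _ => h m)). lra. apply cw_const. }
  assert (H := is_RInt_minus _ _ _ _ _ _ (RInt_correct _ _ _ HexG) (RInt_correct _ _ _ HexC)).
  eapply is_RInt_ext. 2: exact H.
  intros x Hx. rewrite Rmin_left, Rmax_right in Hx by lra. rewrite (S_minus S HS) by lra. auto.
Qed.

Lemma delta_bound1 tau tk c1 M : 0 < tau -> 0 <= tk -> 0 <= c1 <= 1 -> 0 <= M ->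
  (forall t, 0 <= t <= tau -> forall x, norm (S t x) <= M * norm x) ->
  norm (minus (RInt (fun u => S (tau - u) (h (rpow (tk + u) r))) 0 tau)
              (tau_phi1 S tau (h (rpow (tk + c1 * tau) r))))
    <= tau * (M * (L * (rpow (tk + tau) r - rpow tk r))).
Proof.
  intros Htau Htk Hc1 HM0 HM.
  assert (H := delta_int tau tk (rpow (tk + c1 * tau) r) Htau Htk).
  assert (Hb : forall x, 0 <= x <= tau ->
    norm (S (tau - x) (minus (h (rpow (tk + x) r)) (h (rpow (tk + c1 * tau) r))))
      <= M * (L * (rpow (tk + tau) r - rpow tk r))).
  { intros x Hx. eapply Rle_trans. apply HM; lra.
    apply Rmult_le_compat_l; auto.
    eapply Rle_trans. apply Hh; apply rpow_ge0.
    apply Rmult_le_compat_l; auto.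
    apply abs_in_range; split; apply rpow_mono; nra. }
  pose proof (norm_RInt_le_const _ 0 tau _ _ ltac:(lra) Hb H) as Hn.
  replace (tau - 0) with tau in Hn by ring. exact Hn.
Qed.


Lemma gI9 {G : AbelianGroup} (P Q R : G) : (minus P Q) +' (minus Q R) = minus P R.
Proof. gnorm. rewrite pcancel1. auto. Qed.
Lemma xI9 (P Q R0 : X) : plus (minus P Q) (minus Q R0) = minus P R0.
Proof. exact (gI9 P Q R0). Qed.

Lemma w_ident t (a b v : X) (c : R) : 0 <= t ->
  minus (S t (minus a b)) (scal c v) =
  plus (S t (minus a (plus b (scal c v)))) (scal c (minus (S t v) v)).
Proof.
  intros Ht. symmetry.
  transitivity (plus (minus (S t (minus a b)) (scal c (S t v))) (minus (scal c (S t v)) (scal c v))).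
  - f_equal.
    + transitivity (S t (minus (minus a b) (scal c v))). f_equal; apply xI4.
      transitivity (minus (S t (minus a b)) (S t (scal c v))). apply (S_minus S HS); lra.
      f_equal. apply (S_scal S HS); lra.
    + apply sc_minus_l.
  - apply xI9.
Qed.

Lemma scal_lin_R (v : X) : forall (f : R -> R) a b I, is_RInt f a b I ->
  is_RInt (fun u => scal (f u) v) a b (scal I v).
Proof.
  intros f a b I H.
  apply (is_RInt_L (U := R_NormedModule) (fun x : R => scal x v)); auto.
  - intros x y. exact (scal_distr_r x y v).
  - intros a0 x. exact (eq_sym (scal_assoc a0 x v)).
  - exists (norm v). intros x. eapply Rle_trans. exact (norm_scal x v).
    change (Rabs x * norm v <= norm v * Rabs x). lra.
Qed.

Lemma delta_bound2 tau tk M (h' h'' : R -> X) Mh KA : 0 < tau -> 0 <= tk -> 0 <= M ->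
  (forall t, 0 <= t <= tau -> forall x, norm (S t x) <= M * norm x) ->
  deriv_nonneg h h' -> deriv_nonneg h' h'' ->
  (forall x, 0 <= x -> norm (h' x) <= Mh /\ norm (h'' x) <= Mh) ->
  (forall x, 0 <= x -> exists v, generator S (h' x) v /\ norm v <= KA) ->
  norm (minus (RInt (fun u => S (tau - u) (h (rpow (tk + u) r))) 0 tau)
              (tau_phi1 S tau (h (rpow (tk + 1 / 2 * tau) r))))
    <= tau / 2 * Mh * (2 * rpow (tk + tau / 2) r - rpow tk r - rpow (tk + tau) r)
       + tau * (M * Mh * (rpow (tk + tau) r - rpow tk r) * rpow tau r
                + (rpow (tk + tau) r - rpow tk r) * M * KA * tau).
Proof.
  intros Htau Htk HM0 HM Hd1 Hd2 HMh HKA.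
  replace (tk + 1 / 2 * tau) with (tk + tau / 2) by field.
  set (m := rpow (tk + tau / 2) r).
  assert (Hm0 : 0 <= m) by apply rpow_ge0.
  set (phi := fun u => rpow (tk + u) r).
  set (Dl := rpow (tk + tau) r - rpow tk r).
  set (Dk := 2 * rpow (tk + tau / 2) r - rpow tk r - rpow (tk + tau) r).
  assert (HMh0 : 0 <= Mh) by (destruct (HMh 0 ltac:(lra)); pose proof (norm_ge_0' (h' 0)); lra).
  set (v := h' m).
  destruct (HKA m Hm0) as [w [Hg Hw]].
  assert (HKA0 : 0 <= KA) by (pose proof (norm_ge_0' w); lra).
  assert (Hdelta := delta_int tau tk m Htau Htk).
  set (delta := minus (RInt (fun u => S (tau - u) (h (rpow (tk + u) r))) 0 tau) (tau_phi1 S tau (h m))).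
  fold delta in Hdelta.
  assert (HexI : ex_RInt (fun u => phi u - m) 0 tau).
  { apply (@ex_RInt_cw R_CompleteNormedModule). lra. apply cw_rpow_R; lra. }
  set (Iphi := RInt (fun u => phi u - m) 0 tau).
  assert (HsV := scal_lin_R v _ _ _ _ (RInt_correct _ _ _ HexI)). fold Iphi in HsV.
  assert (Hwi := is_RInt_minus _ _ _ _ _ _ Hdelta HsV).
  assert (Hdl : 0 <= Dl) by (unfold Dl; pose proof (rpow_mono tk (tk + tau) r ltac:(lra) ltac:(lra)); lra).
  assert (HDlt : Dl <= rpow tau r).
  { unfold Dl. pose proof (rpow_holder tk (tk + tau) r ltac:(lra) ltac:(lra)).
    replace (tk + tau - tk) with tau in H by ring. auto. }
  set (B := M * Mh * Dl * rpow tau r + Dl * M * KA * tau).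
  assert (Hb : forall u, 0 <= u <= tau ->
     norm (minus (S (tau - u) (minus (h (rpow (tk + u) r)) (h m))) (scal (phi u - m) v)) <= B).
  { intros u Hu.
    set (c := phi u - m).
    assert (Hc : Rabs c <= Dl).
    { unfold c, phi, Dl, m. apply abs_in_range; split; apply rpow_mono; lra. }
    rewrite (w_ident (tau - u) _ _ v c) by lra.
    eapply Rle_trans. apply norm_tri'.
    assert (T1 : norm (S (tau - u) (minus (h (rpow (tk + u) r)) (plus (h m) (scal c v)))) <= M * (Mh * c ^ 2)).
    { eapply Rle_trans. apply HM; lra. apply Rmult_le_compat_l; auto.
      unfold c, v, phi. replace (c ^ 2) with ((rpow (tk + u) r - m) ^ 2) by (unfold c, phi; auto).
      apply (taylor h h' h'' Mh Hd1 Hd2); auto.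
      intros x Hx; apply HMh; auto. apply rpow_ge0. }
    assert (T2 : norm (scal c (minus (S (tau - u) v) v)) <= Rabs c * (M * norm w * (tau - u))).
    { rewrite norm_scal_R. apply Rmult_le_compat_l. apply Rabs_pos.
      apply (S_gen_lip S HS v w tau M Hg HM0 HM). lra. }
    assert (c ^ 2 <= Dl * rpow tau r).
    { replace (c ^ 2) with (Rabs c * Rabs c) by (rewrite <- Rabs_mult; simpl; rewrite Rmult_1_r; apply Rabs_right; nra).
      pose proof (Rabs_pos c). apply Rmult_le_compat; auto; lra. }
    assert (M * (Mh * c ^ 2) <= M * (Mh * (Dl * rpow tau r))).
    { apply Rmult_le_compat_l; auto. apply Rmult_le_compat_l; auto. }
    assert (Rabs c * (M * norm w * (tau - u)) <= Dl * M * KA * tau).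
    { pose proof (Rabs_pos c). pose proof (norm_ge_0' w).
      replace (Dl * M * KA * tau) with (Dl * (M * KA * tau)) by ring.
      apply Rmult_le_compat; auto. apply Rmult_le_pos; [apply Rmult_le_pos|]; lra.
      apply Rmult_le_compat; try lra. apply Rmult_le_pos; lra. apply Rmult_le_compat_l; lra. }
    unfold B. lra. }
  pose proof (norm_RInt_le_const _ 0 tau _ _ ltac:(lra) Hb Hwi) as Hn.
  replace (tau - 0) with tau in Hn by ring.
  assert (Hmid : Rabs Iphi <= tau / 2 * Dk).
  { unfold Iphi. apply midpoint_bound; auto. apply cw_rpow_R; lra.
    intros u Hu. unfold phi, m, Dk. split.
    - pose proof (rpow_incr_decr (tk + u) (tk + tau / 2) (tau / 2 - u) r Hr ltac:(lra) ltac:(lra)).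
      replace (tk + tau / 2 + (tau / 2 - u)) with (tk + (tau - u)) in H by field.
      replace (tk + u + (tau / 2 - u)) with (tk + tau / 2) in H by field. lra.
    - pose proof (rpow_incr_decr tk (tk + (tau - u)) u r Hr ltac:(lra) ltac:(lra)).
      replace (tk + (tau - u) + u) with (tk + tau) in H by ring.
      lra. }
  assert (Hsc : norm (scal Iphi v) <= tau / 2 * Dk * Mh).
  { rewrite norm_scal_R. apply Rmult_le_compat; auto. apply Rabs_pos. apply norm_ge_0'. apply HMh; auto. }
  pose proof (norm_minus_ge delta (scal Iphi v)).
  assert (E1 : norm (minus delta (scal Iphi v)) <= tau * B) by (unfold B; exact Hn).
  unfold B, Dk in *. fold m in Hsc. lra.
Qed.

End Delta.

Fixpoint rsum (b : nat -> R) (n : nat) : R :=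
  match n with O => 0 | Datatypes.S m => rsum b m + b m end.

Lemma x_plus0 {X : CompleteNormedModule R_AbsRing} (a : X) : plus a zero = a.
Proof. exact (plus_zero_r a). Qed.
Lemma x_minself {X : CompleteNormedModule R_AbsRing} (a : X) : minus a a = zero.
Proof. exact (minus_eq_zero a). Qed.

Lemma acc {X : CompleteNormedModule R_AbsRing} (S : R -> X -> X) (HS : C0_semigroup S)
  (tau M : R) (N : nat) (e d : nat -> X) (b : nat -> R) :
  0 < tau -> 0 <= M -> (forall t, 0 <= t <= INR N * tau -> forall x, norm (S t x) <= M * norm x) ->
  e O = zero -> (forall k, (k < N)%nat -> e (Datatypes.S k) = plus (S tau (e k)) (d k)) ->
  (forall k, (k < N)%nat -> norm (d k) <= b k) ->
  forall n, (n <= N)%nat -> norm (e n) <= M * rsum b n.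
Proof.
  intros Htau HM0 HM He0 Hrec Hd.
  assert (Gen : forall n, (n <= N)%nat -> forall j, (j + n <= N)%nat ->
            norm (S (INR j * tau) (e n)) <= M * rsum b n).
  { induction n; intros Hn j Hj.
    - rewrite He0, (S_zero S HS), norm_zero'. simpl. lra.
      pose proof (pos_INR j). nra.
    - rewrite Hrec by lia. pose proof (pos_INR j).
      rewrite (S_plus S HS) by nra. rewrite <- (S_comp S HS) by nra.
      replace (INR j * tau + tau) with (INR (Datatypes.S j) * tau) by (rewrite S_INR; ring).
      eapply Rle_trans. apply norm_tri'.
      assert (H1 := IHn ltac:(lia) (Datatypes.S j) ltac:(lia)).
      assert (H2 : norm (S (INR j * tau) (d n)) <= M * b n).
      { eapply Rle_trans. apply HM. split. nra. apply Rmult_le_compat_r. lra. apply le_INR. lia.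
        apply Rmult_le_compat_l; auto. }
      simpl rsum. lra. }
  intros n Hn. specialize (Gen n Hn 0%nat ltac:(lia)).
  replace (INR 0 * tau) with 0 in Gen by (simpl; ring). rewrite (S_0 S HS) in Gen. auto.
Qed.

Lemma tele1 r (tau K : R) n :
  rsum (fun k => K * (rpow (INR k * tau + tau) r - rpow (INR k * tau) r)) n = K * rpow (INR n * tau) r.
Proof.
  induction n.
  - simpl. rewrite Rmult_0_l, rpow_0. ring.
  - simpl rsum. rewrite IHn. rewrite S_INR. replace ((INR n + 1) * tau) with (INR n * tau + tau) by ring. ring.
Qed.

Lemma tele2 r (tau al be : R) n : 0 < r < 1 -> 0 < tau -> 0 <= al ->
  rsum (fun k => al * (2 * rpow (INR k * tau + tau / 2) r - rpow (INR k * tau) r - rpow (INR k * tau + tau) r)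
               + be * (rpow (INR k * tau + tau) r - rpow (INR k * tau) r)) n
  <= al * ((rpow (tau / 2) r) - (rpow (INR n * tau + tau / 2) r - rpow (INR n * tau) r)) + be * rpow (INR n * tau) r.
Proof.
  intros Hr Htau Hal. induction n.
  - simpl. rewrite !Rmult_0_l, !Rplus_0_l, rpow_0. lra.
  - simpl rsum. rewrite S_INR. replace ((INR n + 1) * tau) with (INR n * tau + tau) by ring.
    set (tk := INR n * tau).
    assert (Htk : 0 <= tk) by (unfold tk; pose proof (pos_INR n); nra).
    pose proof (rpow_incr_decr (tk + tau / 2) (tk + tau) (tau / 2) r Hr ltac:(lra) ltac:(lra)).
    replace (tk + tau / 2 + tau / 2) with (tk + tau) in H by field.
    fold tk in IHn.
    assert (al * (2 * rpow (tk + tau / 2) r - rpow tk r - rpow (tk + tau) r) <=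
            al * ((rpow (tk + tau / 2) r - rpow tk r) - (rpow (tk + tau + tau / 2) r - rpow (tk + tau) r))).
    { apply Rmult_le_compat_l; auto. lra. }
    lra.
Qed.

Lemma rsum_ext (f g : nat -> R) n : (forall k, f k = g k) -> rsum f n = rsum g n.
Proof. intros E. induction n; simpl; auto. rewrite IHn, E. auto. Qed.

Lemma grid_facts (T : R) (N n : nat) : 0 < T -> (0 < N)%nat -> (n <= N)%nat ->
  0 < T / INR N /\ INR N * (T / INR N) = T /\ 0 <= INR n * (T / INR N) <= T /\ T / INR N <= T.
Proof.
  intros HT HN Hn.
  assert (HN' : 1 <= INR N) by (apply (le_INR 1); lia).
  assert (Hn' : INR n <= INR N) by (apply le_INR; lia).
  pose proof (pos_INR n).
  assert (Ht : 0 < T / INR N) by (apply Rdiv_lt_0_compat; lra).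
  split; auto. split. field. lra. split. split. nra.
  replace T with (INR N * (T / INR N)) at 2 by (field; lra). nra.
  apply (Rmult_le_reg_l (INR N)). lra. replace (INR N * (T / INR N)) with T by (field; lra). nra.
Qed.

Lemma e0_zero {X : CompleteNormedModule R_AbsRing} (S : R -> X -> X) (HS : C0_semigroup S) h r y0 tau c1 :
  minus (mild_sol S h r y0 (INR 0 * tau)) (EQRF1 S h r y0 tau c1 0) = zero.
Proof.
  simpl EQRF1. replace (INR 0 * tau) with 0 by (simpl; ring). unfold mild_sol.
  rewrite (S_0 S HS), RInt_point, x_plus0. apply x_minself.
Qed.

Theorem theorem1 (X : CompleteNormedModule R_AbsRing) (S : R -> X -> X)
  (T r c1 : R) (h : R -> X) :
  C0_semigroup S -> 0 < T -> 0 < r < 1 -> 0 <= c1 <= 1 ->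
  ( (exists h' : R -> X, deriv_nonneg h h' /\
        exists M, forall x, 0 <= x -> norm (h' x) <= M) ->
    exists C : R, forall (y0 : X) (N : nat), (0 < N)%nat ->
      forall n : nat, (n <= N)%nat ->
        norm (minus (mild_sol S h r y0 (INR n * (T / INR N)))
                    (EQRF1 S h r y0 (T / INR N) c1 n))
          <= C * (T / INR N) )
  /\
  ( (exists h' h'' : R -> X,
        deriv_nonneg h h' /\ deriv_nonneg h' h'' /\
        (exists M, forall x, 0 <= x -> norm (h' x) <= M /\ norm (h'' x) <= M) /\
        (exists M, forall x, 0 <= x ->
            exists v, generator S (h' x) v /\ norm v <= M)) ->
    c1 = 1 / 2 ->
    exists C : R, forall (y0 : X) (N : nat), (0 < N)%nat ->
      forall n : nat, (n <= N)%nat ->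
        norm (minus (mild_sol S h r y0 (INR n * (T / INR N)))
                    (EQRF1 S h r y0 (T / INR N) c1 n))
          <= C * Rpower (T / INR N) (1 + r) ).
Proof.
  intros HS HT Hr Hc1.
  destruct (S_bound_T S HS T) as [M [HM1 HM]].
  assert (HM0 : 0 <= M) by lra.
  split.
  - intros [h' [Hd [M1 HM1']]].
    assert (HL0 : 0 <= M1) by (pose proof (HM1' 0 ltac:(lra)); pose proof (norm_ge_0' (h' 0)); lra).
    assert (Hh := deriv_lip_abs h h' M1 Hd HM1').
    exists (M * (M * (M1 * rpow T r))).
    intros y0 N HN n Hn.
    destruct (grid_facts T N n HT HN Hn) as [Htau [HNt [Hnt HtT]]].
    set (tau := T / INR N) in *.
    set (e := fun k => minus (mild_sol S h r y0 (INR k * tau)) (EQRF1 S h r y0 tau c1 k)).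
    set (d := fun k : nat => minus (RInt (fun u => S (tau - u) (h (rpow (INR k * tau + u) r))) 0 tau)
                           (tau_phi1 S tau (h (rpow (INR k * tau + c1 * tau) r)))).
    set (b := fun k : nat => tau * (M * (M1 * (rpow (INR k * tau + tau) r - rpow (INR k * tau) r)))).
    assert (Hacc := acc S HS tau M N e d b Htau HM0).
    specialize (Hacc ltac:(rewrite HNt; exact HM) (e0_zero S HS h r y0 tau c1)).
    specialize (Hacc (fun k _ => rec_step S HS h r c1 M1 Hr HL0 Hh tau k y0 Htau)).
    assert (Hdb : forall k, (k < N)%nat -> norm (d k) <= b k).
    { intros k Hk. unfold d, b.
      apply (delta_bound1 S HS h r M1 Hr HL0 Hh tau (INR k * tau) c1 M Htau); auto.
      pose proof (pos_INR k); nra.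
      intros t Ht x. apply HM. lra. }
    specialize (Hacc Hdb n Hn).
    unfold b in Hacc.
    rewrite (rsum_ext _ (fun k => (tau * (M * M1)) * (rpow (INR k * tau + tau) r - rpow (INR k * tau) r)))
      in Hacc by (intros; ring).
    rewrite tele1 in Hacc.
    assert (rpow (INR n * tau) r <= rpow T r) by (apply rpow_mono; lra).
    apply Rle_trans with (1 := Hacc).
    assert (0 <= M * M1) by nra.
    assert (M * (M1 * rpow (INR n * tau) r) <= M * (M1 * rpow T r)).
    { apply Rmult_le_compat_l; auto. apply Rmult_le_compat_l; auto. }
    assert (tau * (M * (M1 * rpow (INR n * tau) r)) <= tau * (M * (M1 * rpow T r))) by (apply Rmult_le_compat_l; lra).
    assert (M * (tau * (M * (M1 * rpow (INR n * tau) r))) <= M * (tau * (M * (M1 * rpow T r)))) by (apply Rmult_le_compat_l; lra).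
    lra.
  - intros [h' [h'' [Hd1 [Hd2 [[Mh HMh] [KA HKA]]]]]] Hc. subst c1.
    assert (HMh0 : 0 <= Mh) by (destruct (HMh 0 ltac:(lra)); pose proof (norm_ge_0' (h' 0)); lra).
    assert (HL := fun x Hx => proj1 (HMh x Hx)).
    assert (Hh := deriv_lip_abs h h' Mh Hd1 HL).
    destruct (HKA 0 ltac:(lra)) as [w0 [_ Hw0]].
    assert (HKA0 : 0 <= KA) by (pose proof (norm_ge_0' w0); lra).
    set (PT := Rpower T (1 - r)).
    exists (M * (Mh / 2 + M * Mh * rpow T r + M * KA * rpow T r * PT)).
    intros y0 N HN n Hn.
    destruct (grid_facts T N n HT HN Hn) as [Htau [HNt [Hnt HtT]]].
    set (tau := T / INR N) in *.
    set (e := fun k => minus (mild_sol S h r y0 (INR k * tau)) (EQRF1 S h r y0 tau (1 / 2) k)).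
    set (d := fun k : nat => minus (RInt (fun u => S (tau - u) (h (rpow (INR k * tau + u) r))) 0 tau)
                           (tau_phi1 S tau (h (rpow (INR k * tau + 1 / 2 * tau) r)))).
    set (al := tau / 2 * Mh).
    set (be := tau * (M * Mh * rpow tau r + M * KA * tau)).
    set (b := fun k : nat => al * (2 * rpow (INR k * tau + tau / 2) r - rpow (INR k * tau) r - rpow (INR k * tau + tau) r)
               + be * (rpow (INR k * tau + tau) r - rpow (INR k * tau) r)).
    assert (Hacc := acc S HS tau M N e d b Htau HM0).
    specialize (Hacc ltac:(rewrite HNt; exact HM) (e0_zero S HS h r y0 tau (1 / 2))).
    specialize (Hacc (fun k _ => rec_step S HS h r (1 / 2) Mh Hr HMh0 Hh tau k y0 Htau)).
    assert (Hdb : forall k, (k < N)%nat -> norm (d k) <= b k).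
    { intros k Hk. unfold d.
      eapply Rle_trans.
      apply (delta_bound2 S HS h r Mh Hr HMh0 Hh tau (INR k * tau) M h' h'' Mh KA Htau); auto.
      pose proof (pos_INR k); nra.
      intros t Ht x. apply HM. lra.
      unfold b, al, be. right. ring. }
    specialize (Hacc Hdb n Hn).
    assert (Hal : 0 <= al) by (unfold al; apply Rmult_le_pos; lra).
    assert (Hbe : 0 <= be).
    { unfold be. pose proof (rpow_ge0 tau r).
      assert (0 <= M * Mh) by (apply Rmult_le_pos; lra).
      assert (0 <= M * KA) by (apply Rmult_le_pos; lra).
      assert (0 <= M * Mh * rpow tau r) by (apply Rmult_le_pos; lra).
      assert (0 <= M * KA * tau) by (apply Rmult_le_pos; lra).
      apply Rmult_le_pos; lra. }
    pose proof (tele2 r tau al be n Hr Htau Hal) as Ht2. fold b in Ht2.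
    assert (HA : 0 <= rpow (INR n * tau + tau / 2) r - rpow (INR n * tau) r).
    { pose proof (rpow_mono (INR n * tau) (INR n * tau + tau / 2) r ltac:(lra) ltac:(lra)). lra. }
    assert (HA0 : rpow (tau / 2) r <= rpow tau r) by (apply rpow_mono; lra).
    assert (HnT : rpow (INR n * tau) r <= rpow T r) by (apply rpow_mono; lra).
    set (rt := rpow tau r) in *.
    set (rT := rpow T r) in *.
    assert (Hrt : 0 <= rt) by apply rpow_ge0.
    assert (HrT : 0 <= rT) by apply rpow_ge0.
    assert (Hsum : rsum b n <= al * rt + be * rT).
    { eapply Rle_trans. exact Ht2.
      assert (al * (rpow (tau / 2) r - (rpow (INR n * tau + tau / 2) r - rpow (INR n * tau) r)) <= al * rt)
        by (apply Rmult_le_compat_l; lra).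
      assert (be * rpow (INR n * tau) r <= be * rT) by (apply Rmult_le_compat_l; lra).
      lra. }
    assert (Hpow : Rpower tau (1 + r) = tau * rt).
    { unfold rt. rewrite rpow_pos_eq by lra. rewrite Rpower_plus, Rpower_1 by lra. auto. }
    assert (Htau2 : tau <= rt * PT).
    { unfold rt, PT. rewrite rpow_pos_eq by lra.
      replace tau with (Rpower tau (r + (1 - r))) at 1.
      rewrite Rpower_plus. apply Rmult_le_compat_l. left; apply Rpower_pos.
      apply Rle_Rpower_l; lra.
      replace (r + (1 - r)) with 1 by ring. apply Rpower_1; lra. }
    assert (HPT : 0 <= PT) by (unfold PT; left; apply Rpower_pos).
    rewrite Hpow.
    apply Rle_trans with (1 := Hacc).
    apply Rle_trans with (M * (al * rt + be * rT)). apply Rmult_le_compat_l; auto.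
    rewrite Rmult_assoc. apply Rmult_le_compat_l; auto.
    unfold al, be.
    (* target: tau/2*Mh*rt + tau*(M*Mh*rt + M*KA*tau)*rT <= (Mh/2 + M*Mh*rT + M*KA*rT*PT) * (tau*rt) *)
    assert (H1 : tau * (M * KA * tau) * rT <= tau * (M * KA * (rt * PT)) * rT).
    { apply Rmult_le_compat_r; auto. apply Rmult_le_compat_l; [lra|].
      apply Rmult_le_compat_l; [nra|auto]. }
    nra.
Qed.
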